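(* Let $d\ge2$ and let $(X_n)$ be a recurrent rotor walk on $\mathbb{T}_d$ with i.i.d. random initial configuration of law $(r_j)_{0\le j\le d}$, i.e. $\mathbb{E}[\rho(v)]\ge d-1$ and $r_d>0$. Let $g_0\equiv0$ and, for $k\ge1$ and $x\in\Sigma_d^{\mathbb{N}}$, $g_k(x)=\mathbb{E}\big[f_{R_{\tau_k}}(x)\big]$. Then for every $k\ge1$, every $x=(x_1,x_2,\dots)\in\Sigma_d^{\mathbb{N}}$ and every $i\in\{0,\dots,d-1\}$, $$g_k(ix)=1+\big(1-p_{d-i}\big)\,g_{k-1}(x)+p_{d-i}\,g_k(x),$$ where $ix=(i,x_1,x_2,\dots)$ and $p_l=\sum_{j=0}^{l-1}r_j$.
   Context: Let $\widetilde{\mathbb{T}}_d$ be the rooted tree with root $r$ in which every vertex has exactly $d$ children, and let $\mathbb{T}_d$ be $\widetilde{\mathbb{T}}_d$ together with a sink vertex $o$ joined to $r$. Let $\Sigma_d=\{0,\dots,d-1\}$; identify $\widetilde{\mathbb{T}}_d$ with the set of finite words over $\Sigma_d$, the root $r$ being the empty word $\epsilon$ and the children of a word $w$ being the words $wk$, $k\in\Sigma_d$. For $v\in\widetilde{\mathbb{T}}_d$ its neighbours are labelled $v^{(0)}$ (the parent, with $r^{(0)}=o$) and $v^{(d-k)}=vk$ for $k\in\Sigma_d$. The rotor walk $(X_n)$ starts at $X_0=r$; if $X_n=v\ne o$ then $\rho(v)$ is replaced by $\rho(v)+1\pmod{d+1}$ (other rotors unchanged) and $X_{n+1}=v^{(\text{new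 value of }\rho(v))}$; if $X_n=o$ then $X_{n+1}=r$. The initial rotors $\rho(v)\in\{0,\dots,d\}$ are i.i.d. with $\mathbb{P}[\rho(v)=j]=r_j$. The range is $R_n=\{X_0,\dots,X_n\}\setminus\{o\}$, and $\tau_0=0$, $\tau_k=\inf\{n>\tau_{k-1}:X_n=o\}$. For a finite connected subset $A\subset\widetilde{\mathbb{T}}_d$ containing $\epsilon$ and an infinite sequence $x=(x_1,x_2,\dots)\in\Sigma_d^{\mathbb{N}}$ (corresponding to the $d$-ary expansion $\sum_i x_id^{-i}$ of a point of $[0,1]$), the contour of $A$ is $f_A(x)=\min\{n\ge1: x_1x_2\cdots x_n\notin A\}$. *)

(* Defs.v *)
From Stdlib Require Import Reals List Arith.
Import ListNotations.
Open Scope R_scope.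

(* Vertices of the tree T~_d: finite words over {0,...,d-1}, as lists
   (first letter = head).  The root r is the empty word [];
   the sink o is represented by [None] in positions. *)
Definition word := list nat.

Definition sumR (n : nat) (f : nat -> R) : R :=
  fold_right Rplus 0 (map f (seq 0 n)).

Definition p (r : nat -> R) (l : nat) : R := sumR l r.

Fixpoint words_len (d n : nat) : list word :=
  match n with
  | O => [nil]
  | S m => flat_map (fun w => map (fun k => w ++ [k]) (seq 0 d)) (words_len d m)
  end.
Definition words_upto (d N : nat) : list word := flat_map (words_len d) (seq 0 N).

(* Expectation over i.i.d. rotors rho(v) ~ (r_j)_{0<=j<=d} for v in vs
   (other vertices get the irrelevant default rotor 0). *)
Fixpoint Efin (r : nat -> R) (d : nat) (vs : list word)
  (F : (word -> nat) -> R) : R :=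
  match vs with
  | nil => F (fun _ => 0%nat)
  | v :: vs' =>
      sumR (S d) (fun j => r j *
        Efin r d vs' (fun c => F (fun w => if list_eq_dec Nat.eq_dec w v then j else c w)))
  end.

(* Rotor walk run from state (pos, rho, visits to o so far, range so far),
   for at most [fuel] steps, stopped at the k-th visit to o (time tau_k)
   or upon reaching a vertex of depth >= N (time sigma_N).
   Returns the range (list of visited vertices of the tree, o excluded). *)
Fixpoint run (d k : nat) (fuel N : nat) (pos : option word)
  (rho : word -> nat) (visits : nat) (range : list word) : list word :=
  match fuel with
  | O => range
  | S f =>
    if Nat.eqb visits k then range else
    match pos with
    | None => run d k f N (Some nil) rho visits (nil :: range)
    | Some v =>
      if Nat.leb N (length v) then range else
      let r' := Nat.modulo (rho v + 1) (d + 1) in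
      let rho' := fun w => if list_eq_dec Nat.eq_dec w v then r' else rho w in
      let next : option word :=
        if Nat.eqb r' 0 then
          (match v with nil => None | _ => Some (removelast v) end)
        else Some (v ++ [(d - r')%nat]) in
      match next with
      | None => run d k f N None rho' (S visits) range
      | Some w => run d k f N (Some w) rho' visits (w :: range)
      end
    end
  end.

(* x_1 ... x_n, where the sequence x is given as x 0 = x_1, x 1 = x_2, ... *)
Definition prefix (x : nat -> nat) (n : nat) : word := map x (seq 0 n).

Fixpoint ft (A : list word) (x : nat -> nat) (n m : nat) : nat :=
  match m with
  | O => n
  | S m' => if in_dec (list_eq_dec Nat.eq_dec) (prefix x n) A
            then ft A x (S n) m' else n
  end.

(* min (f_A(x), N), where f_A(x) = min {n >= 1 : x_1...x_n notin A} *)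
Definition contour_trunc (A : list word) (x : nat -> nat) (N : nat) : nat :=
  match N with O => O | S M => ft A x 1 M end.

(* E[ min( f_{R_{tau_k /\ sigma_N /\ N}}(x), N ) ]; this random variable only
   depends on the rotors at depth < N, and it increases (in N) pointwise to
   f_{R_{tau_k}}(x); by monotone convergence E[f_{R_{tau_k}}(x)] is the
   supremum over N of these truncated expectations. *)
Definition Etrunc (r : nat -> R) (d k : nat) (x : nat -> nat) (N : nat) : R :=
  Efin r d (words_upto d N)
    (fun c => INR (contour_trunc (run d k N N (Some nil) c 0 [nil]) x N)).

(* Extended nonnegative reals: None = +infinity *)
Definition ER := option R.
Definition ER_plus (a b : ER) : ER :=
  match a, b with Some x, Some y => Some (x + y) | _, _ => None end.
(* scalar multiplication by a real, with the convention 0 * infinity = 0 *)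
Definition ER_scal (a : R) (b : ER) : ER :=
  match b with
  | Some y => Some (a * y)
  | None => if Req_dec_T a 0 then Some 0 else None
  end.

Definition ext_sup (u : nat -> R) (v : ER) : Prop :=
  match v with
  | Some l => is_lub (fun y => exists n, y = u n) l
  | None => ~ bound (fun y => exists n, y = u n)
  end.

Definition g_val (r : nat -> R) (d k : nat) (x : nat -> nat) (v : ER) : Prop :=
  match k with
  | O => v = Some 0
  | S _ => ext_sup (Etrunc r d k x) v
  end.

Definition scons (i : nat) (x : nat -> nat) : nat -> nat :=
  fun n => match n with O => i | S m => x m end.

(* Main.v *)
Require Import Defs.
From Stdlib Require Import Reals List Arith.
Open Scope R_scope.
From Stdlib Require Import Lia Lra FunctionalExtensionality Permutation Classical.
Import ListNotations.
Close Scope R_scope.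

Record st := mkst { spos : option word; srho : word -> nat; svis : nat; srng : list word }.

Definition upd (c : word -> nat) (v : word) (j : nat) : word -> nat :=
  fun w => if list_eq_dec Nat.eq_dec w v then j else c w.

Definition halted (k N : nat) (s : st) : bool :=
  Nat.eqb (svis s) k ||
  match spos s with None => false | Some v => Nat.leb N (length v) end.

Definition nextpos (d : nat) (v : word) (r' : nat) : option word :=
  if Nat.eqb r' 0 then (match v with nil => None | _ => Some (removelast v) end)
  else Some (v ++ [(d - r')%nat]).

Definition step (d : nat) (s : st) : st :=
  match spos s with
  | None => mkst (Some nil) (srho s) (svis s) (nil :: srng s)
  | Some v =>
    let r' := Nat.modulo (srho s v + 1) (d + 1) in
    let rho' := upd (srho s) v r' in
    match nextpos d v r' with
    | None => mkst None rho' (S (svis s)) (srng s)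
    | Some w => mkst (Some w) rho' (svis s) (w :: srng s)
    end
  end.

Fixpoint runS (d k f N : nat) (s : st) : st :=
  match f with
  | O => s
  | S f' => if halted k N s then s else runS d k f' N (step d s)
  end.

Lemma run_runS d k f N pos rho vis rng :
  run d k f N pos rho vis rng = srng (runS d k f N (mkst pos rho vis rng)).
Proof.
  revert pos rho vis rng; induction f as [|f IH]; intros pos rho vis rng; simpl; auto.
  unfold halted; simpl.
  destruct (Nat.eqb vis k); simpl; auto.
  destruct pos as [v|]; simpl.
  - destruct (Nat.leb N (length v)); simpl; auto.
    unfold step, nextpos, upd; simpl.
    destruct (Nat.eqb ((rho v + 1) mod (d + 1)) 0).
    + destruct v; simpl; rewrite IH; reflexivity.
    + rewrite IH; reflexivity.
  - rewrite IH; reflexivity.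
Qed.

Lemma runS_halted d k f N s : halted k N s = true -> runS d k f N s = s.
Proof. destruct f; simpl; auto. intros H; rewrite H; auto. Qed.

Lemma runS_S d k f N s : halted k N s = false -> runS d k (S f) N s = runS d k f N (step d s).
Proof. intros H; simpl; rewrite H; auto. Qed.


Lemma step_rng d s : incl (srng s) (srng (step d s)).
Proof.
  unfold step. destruct (spos s) as [v|]; simpl.
  - destruct (nextpos d v _); simpl; intros w0 Hw; simpl; auto.
  - intros w0 Hw; simpl; auto.
Qed.

Lemma runS_rng d k f N s : incl (srng s) (srng (runS d k f N s)).
Proof.
  revert s; induction f; intros s; simpl. apply incl_refl.
  destruct (halted k N s). apply incl_refl.
  eapply incl_tran. apply step_rng. apply IHf.
Qed.

Lemma runS_add d k f g N s : runS d k (f + g) N s = runS d k g N (runS d k f N s).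
Proof.
  revert s; induction f; intros s; simpl; auto.
  destruct (halted k N s) eqn:H; auto. rewrite runS_halted; auto.
Qed.

Lemma runS_fuel_mono d k f f' N s : (f <= f')%nat ->
  incl (srng (runS d k f N s)) (srng (runS d k f' N s)).
Proof.
  intros H. replace f' with (f + (f' - f))%nat by lia.
  rewrite runS_add. apply runS_rng.
Qed.

Lemma runS_depth_mono d k f N N' s : (N <= N')%nat ->
  incl (srng (runS d k f N s)) (srng (runS d k f N' s)).
Proof.
  intros HN; revert s; induction f; intros s; simpl. apply incl_refl.
  destruct (halted k N' s) eqn:H'.
  - assert (halted k N s = true).
    { unfold halted in *. destruct (Nat.eqb (svis s) k); simpl in *; auto.
      destruct (spos s); auto. apply Nat.leb_le. apply Nat.leb_le in H'. lia. }
    rewrite H. apply incl_refl.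
  - destruct (halted k N s).
    + eapply incl_tran. apply step_rng. apply runS_rng.
    + apply IHf.
Qed.

Definition complete d k f N s := svis (runS d k f N s) = k.

Lemma complete_mono d k f f' N N' s : (f <= f')%nat -> (N <= N')%nat ->
  complete d k f N s -> runS d k f' N' s = runS d k f N s.
Proof.
  unfold complete. intros Hf HN. revert s f' Hf; induction f; intros s f' Hf Hc; simpl in *.
  - destruct f'; simpl; auto. unfold halted; rewrite Hc, Nat.eqb_refl; auto.
  - destruct (halted k N s) eqn:H.
    + unfold halted in H. destruct (Nat.eqb (svis s) k) eqn:E.
      * apply runS_halted. unfold halted; rewrite E; auto.
      * exfalso. rewrite Hc in E. rewrite Nat.eqb_refl in E. discriminate.
    + destruct f' as [|f']; [lia|]. simpl.
      assert (halted k N' s = false).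
      { unfold halted in *. destruct (Nat.eqb (svis s) k); simpl in *; auto.
        destruct (spos s); auto. apply Nat.leb_gt. apply Nat.leb_gt in H. lia. }
      rewrite H0. apply IHf; auto. lia.
Qed.

Lemma complete_mono' d k f f' N N' s : (f <= f')%nat -> (N <= N')%nat ->
  complete d k f N s -> complete d k f' N' s.
Proof. intros. unfold complete. erewrite complete_mono; eauto. Qed.

Lemma runS_reach_stop d k N s n s' : runS d k n N s = s' -> svis s' = k ->
  forall f, incl (srng (runS d k f N s)) (srng s').
Proof.
  revert s; induction n; intros s Hs Hv f; simpl in Hs.
  - subst s'. rewrite runS_halted. apply incl_refl. unfold halted; rewrite Hv, Nat.eqb_refl; auto.
  - destruct (halted k N s) eqn:H.
    + subst s'. rewrite runS_halted; auto. apply incl_refl.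
    + destruct f; simpl. rewrite <- Hs. eapply incl_tran; [apply step_rng|]; apply runS_rng.
      rewrite H. apply IHn; auto.
Qed.

Ltac bdestr :=
  repeat match goal with
  | |- context [Nat.eqb ?a ?b] => destruct (Nat.eqb_spec a b)
  | |- context [Nat.ltb ?a ?b] => destruct (Nat.ltb_spec a b)
  | |- context [Nat.leb ?a ?b] => destruct (Nat.leb_spec a b)
  | H : context [Nat.eqb ?a ?b] |- _ => destruct (Nat.eqb_spec a b)
  | H : context [Nat.ltb ?a ?b] |- _ => destruct (Nat.ltb_spec a b)
  | H : context [Nat.leb ?a ?b] |- _ => destruct (Nat.leb_spec a b)
  end.

Definition shiftc (j : nat) (c : word -> nat) : word -> nat := fun w => c (j :: w).
Definition indb (b : bool) : nat := if b then 1%nat else 0%nat.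
Definition cnt (d j r0 rho v : nat) : nat :=
  if Nat.eqb v 0 then (if Nat.ltb r0 (d - j) then indb (Nat.leb (d - j) rho) else 0%nat)
  else (indb (Nat.ltb r0 (d - j)) + (v - 1) + indb (Nat.leb (d - j) rho))%nat.
Definition mj (d k j r0 : nat) : nat := if Nat.ltb r0 (d - j) then k else (k - 1)%nat.

Definition posrel (d j r0 : nat) (s t : st) : Prop :=
  match spos s with
  | Some (j' :: w) =>
      if Nat.eqb j' j then
        spos t = Some w /\ S (svis t) = cnt d j r0 (srho s nil) (svis s)
      else spos t = None /\ svis t = cnt d j r0 (srho s nil) (svis s)
  | _ => spos t = None /\ svis t = cnt d j r0 (srho s nil) (svis s)
  end.

Definition Inv (d k r0 j : nat) (s t : st) : Prop :=
  (j < d)%nat /\ (r0 <= d)%nat /\ (1 <= k)%nat /\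
  (forall w, srho t w = srho s (j :: w)) /\
  (srho s nil <= d)%nat /\
  (svis s = 0%nat -> (r0 <= srho s nil)%nat) /\
  (spos s = None -> srho s nil = 0%nat) /\
  (svis s <= k)%nat /\
  (svis s = k -> spos s = None) /\
  (forall w, In (j :: w) (srng s) <-> In w (srng t)) /\
  posrel d j r0 s t.

Definition subj (d j : nat) (s : st) : bool :=
  match spos s with
  | Some (j' :: _) => Nat.eqb j' j
  | Some nil => Nat.eqb (Nat.modulo (srho s nil + 1) (d + 1)) (d - j)
  | None => false
  end.

Lemma upd_eq c v j : upd c v j v = j.
Proof. unfold upd. destruct (list_eq_dec Nat.eq_dec v v); congruence. Qed.
Lemma upd_neq c v j w : w <> v -> upd c v j w = c w.
Proof. unfold upd. destruct (list_eq_dec Nat.eq_dec w v); congruence. Qed.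

Lemma mod_rot d rho : (rho <= d)%nat ->
  Nat.modulo (rho + 1) (d + 1) = if Nat.eqb rho d then 0%nat else (rho + 1)%nat.
Proof.
  intros H. destruct (Nat.eqb_spec rho d).
  - subst. apply Nat.mod_same. lia.
  - apply Nat.mod_small. lia.
Qed.

Lemma mod_le d a : (Nat.modulo a (d + 1) <= d)%nat.
Proof. pose proof (Nat.mod_upper_bound a (d+1)). lia. Qed.

Lemma removelast_cons a (w : word) : w <> nil -> removelast (a :: w) = a :: removelast w.
Proof. destruct w; simpl; congruence. Qed.

Lemma upd_cons (c c' : word -> nat) j w R w' : (forall u, c' u = c (j :: u)) ->
  upd c' w R w' = upd c (j :: w) R (j :: w').
Proof.
  intros H. unfold upd.
  destruct (list_eq_dec Nat.eq_dec w' w); destruct (list_eq_dec Nat.eq_dec (j :: w') (j :: w)); subst; auto.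
  congruence. inversion e; congruence.
Qed.

Lemma Inv_step d k r0 j Nsub s t : Inv d k r0 j s t -> halted k (S Nsub) s = false ->
  (subj d j s = true -> halted (mj d k j r0) Nsub t = false /\ Inv d k r0 j (step d s) (step d t)) /\
  (subj d j s = false -> Inv d k r0 j (step d s) t).
Proof.
  intros (Hj & Hr0 & Hk & Hrho & Hroot & Hv0 & Hnone & Hvk & Hvkn & Hrng & Hpos) Hh.
  unfold halted in Hh. apply Bool.orb_false_iff in Hh as [Hh1 Hh2]. apply Nat.eqb_neq in Hh1.
  destruct s as [pos rho v rng]; simpl in *.
  unfold posrel in Hpos; simpl in Hpos.
  destruct pos as [[|j' w]|].
  -
    unfold subj, step; simpl. rewrite (mod_rot d (rho nil)) by lia.
    destruct (Nat.eqb_spec (rho nil) d) as [E|E].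
    + simpl. split; intros H. exfalso. destruct (d - j)%nat eqn:Ej; [lia|discriminate].
      unfold Inv, posrel; simpl. rewrite upd_eq.
      repeat split; auto; try lia; try (intros; apply Hrng; auto; fail); try apply Hpos.
      destruct Hpos as [Hp Hc]. rewrite Hc, E. unfold cnt, indb. bdestr; simpl; try lia.
    + assert (Hn : nextpos d [] (rho [] + 1) = Some [(d - (rho [] + 1))%nat])
        by (unfold nextpos; destruct (Nat.eqb_spec (rho []+1) 0); [lia|reflexivity]).
      rewrite Hn. destruct Hpos as [Hp Hc]. split; intros H.
      * apply Nat.eqb_eq in H. rewrite Hp. simpl. split.
        -- unfold halted; simpl. rewrite Hp. rewrite Hc.
           unfold mj, cnt, indb; bdestr; simpl; try lia.
        -- unfold Inv, posrel; simpl. replace (d - (rho [] + 1))%nat with j by lia.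
           rewrite Nat.eqb_refl, upd_eq.
           repeat split; auto; try lia.
           ++ discriminate.
           ++ intros [H'|H']; [left; congruence|right; apply Hrng; auto].
           ++ intros [H'|H']; [left; congruence|right; apply Hrng; auto].
           ++ rewrite Hc. unfold cnt, indb; bdestr; simpl; try lia.
      * unfold Inv, posrel; simpl. rewrite upd_eq.
        destruct (Nat.eqb_spec (d - (rho [] + 1)) j) as [E2|E2].
        { exfalso. destruct (Nat.eqb_spec (rho [] + 1) (d - j)); [discriminate|lia]. }
        repeat split; auto; try lia.
        ++ discriminate.
        ++ intros [H'|H']; [inversion H'; lia|apply Hrng; auto].
        ++ intros H'; right; apply Hrng; auto.
        ++ apply Nat.eqb_neq in H. rewrite Hc. unfold cnt, indb; bdestr; simpl; try lia.
  -
    assert (Hlen : (length w < Nsub)%nat).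
    { simpl in Hh2. apply Nat.leb_gt in Hh2. lia. }
    assert (Hroot' : forall R, upd rho (j' :: w) R [] = rho []) by (intros; apply upd_neq; discriminate).
    unfold subj, step; simpl.
    set (R := ((rho (j' :: w) + 1) mod (d + 1))%nat).
    destruct (Nat.eqb_spec j' j) as [E|E].
    + subst j'. destruct Hpos as [Hp Hc]. split; intros H; [|discriminate].
      assert (Hlt : (svis t < mj d k j r0)%nat).
      { unfold mj, cnt, indb in *; bdestr; simpl in *; lia. }
      rewrite Hp. split.
      * unfold halted; simpl. rewrite Hp.
        destruct (Nat.eqb_spec (svis t) (mj d k j r0)); [lia|]. simpl.
        apply Nat.leb_gt. lia.
      * rewrite Hrho. fold R.
        assert (Hup : forall w', srho t w' = rho (j :: w') ) by auto.
        destruct (Nat.eqb_spec R 0) as [ER|ER].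
        -- unfold nextpos. rewrite ER. simpl. destruct w as [|a w'].
           ++ unfold Inv, posrel; simpl. rewrite Hroot'.
              repeat split; auto; try lia.
              ** intros w0; apply upd_cons; auto.
              ** discriminate.
              ** intros [H'|H']; [discriminate| apply Hrng; auto].
              ** intros H'; right; apply Hrng; auto.
           ++ idtac.
              unfold Inv, posrel; simpl. rewrite Hroot'.
              repeat split; auto; try lia.
              all: try first [ intros w0; apply upd_cons; auto | discriminate | intros [H'|H']; [left; congruence | right; apply Hrng; auto] | intros [H'|H']; [discriminate | apply Hrng; auto] | intros H'; right; apply Hrng; auto | rewrite Nat.eqb_refl; split; auto ].
        -- unfold nextpos. destruct (Nat.eqb_spec R 0); [lia|]. simpl.
           unfold Inv, posrel; simpl. rewrite Hroot', Nat.eqb_refl.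
           repeat split; auto; try lia.
           all: first [ intros w0; apply upd_cons; auto | discriminate | intros [H'|H']; [left; congruence | right; apply Hrng; auto] | intros [H'|H']; [discriminate | apply Hrng; auto] | intros H'; right; apply Hrng; auto | rewrite Nat.eqb_refl; split; auto ].
    + destruct (Nat.eqb_spec j' j) as [E'|E']; [congruence|].
      destruct Hpos as [Hp Hc]. split; intros H; [discriminate|].
      destruct (Nat.eqb_spec R 0) as [ER|ER].
      * unfold nextpos. rewrite ER. simpl. destruct w as [|a w'].
        -- unfold Inv, posrel; simpl. rewrite Hroot'.
           repeat split; auto; try lia.
           all: try first [ intros w0; rewrite Hrho; symmetry; apply upd_neq; congruence | discriminate | intros [H'|H']; [congruence | apply Hrng; auto] | intros H'; right; apply Hrng; auto | (destruct (Nat.eqb_spec j' j); [congruence|]; split; auto) ].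

        -- unfold Inv, posrel; simpl. rewrite Hroot'.
           repeat split; auto; try lia.
           all: try first [ intros w0; rewrite Hrho; symmetry; apply upd_neq; congruence | discriminate | intros [H'|H']; [congruence | apply Hrng; auto] | intros H'; right; apply Hrng; auto | (destruct (Nat.eqb_spec j' j); [congruence|]; split; auto) ].

      * unfold nextpos. destruct (Nat.eqb_spec R 0); [lia|]. simpl.
        unfold Inv, posrel; simpl. rewrite Hroot'.
        repeat split; auto; try lia.
        all: try first [ intros w0; rewrite Hrho; symmetry; apply upd_neq; congruence | discriminate | intros [H'|H']; [congruence | apply Hrng; auto] | intros H'; right; apply Hrng; auto | (destruct (Nat.eqb_spec j' j); [congruence|]; split; auto) ].

  - unfold subj, step; simpl. split; intros H; [discriminate|].
    destruct Hpos as [Hp Hc].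
    unfold Inv, posrel; simpl.
    repeat split; auto; try lia.
    all: try first [ discriminate | intros [H'|H']; [congruence | apply Hrng; auto] | intros H'; right; apply Hrng; auto ].
Qed.

Lemma Inv_rng d k r0 j s t : Inv d k r0 j s t -> forall w, In (j :: w) (srng s) <-> In w (srng t).
Proof. intros (_&_&_&_&_&_&_&_&_&H&_); auto. Qed.

Lemma Inv_final d k r0 j s t : Inv d k r0 j s t -> svis s = k -> svis t = mj d k j r0.
Proof.
  intros (Hj&Hr0&Hk&_&_&_&Hn&_&Hvkn&_&Hp) Hv.
  specialize (Hvkn Hv). unfold posrel in Hp. rewrite Hvkn in Hp. destruct Hp as [_ Hc].
  rewrite Hc, (Hn Hvkn), Hv. unfold cnt, mj, indb; bdestr; simpl; lia.
Qed.

Lemma Inv_inside d k r0 j s t w : Inv d k r0 j s t -> (svis s < k)%nat -> spos s = Some (j :: w) ->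
  spos t = Some w /\ (svis t < mj d k j r0)%nat.
Proof.
  intros (Hj&Hr0&Hk&_&_&_&Hn&_&Hvkn&_&Hp) Hv Hs.
  unfold posrel in Hp. rewrite Hs, Nat.eqb_refl in Hp. destruct Hp as [Hp Hc]. split; auto.
  unfold cnt, mj, indb in *; bdestr; simpl in *; lia.
Qed.

Lemma sim_upper d k r0 j Nsub : forall f s t ft, Inv d k r0 j s t -> (f <= ft)%nat ->
  forall w, In (j :: w) (srng (runS d k f (S Nsub) s)) ->
            In w (srng (runS d (mj d k j r0) ft Nsub t)).
Proof.
  induction f; intros s t ft HI Hf w Hw.
  - simpl in Hw. apply runS_rng. apply (Inv_rng _ _ _ _ _ _ HI); auto.
  - destruct (halted k (S Nsub) s) eqn:Hh; [rewrite runS_halted in Hw by auto|rewrite runS_S in Hw by auto].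
    + apply runS_rng. apply (Inv_rng _ _ _ _ _ _ HI); auto.
    + destruct (Inv_step _ _ _ _ _ _ _ HI Hh) as [H1 H2].
      destruct (subj d j s) eqn:Hs.
      * destruct (H1 eq_refl) as [Ht HI']. destruct ft as [|ft]; [lia|].
        rewrite runS_S by auto. eapply IHf; [exact HI'| |exact Hw]; lia.
      * eapply IHf; [apply H2; auto| |exact Hw]; lia.
Qed.

Lemma sim_lower d k r0 j Nsub : forall f s t, Inv d k r0 j s t ->
  svis (runS d k f (S Nsub) s) = k ->
  exists n, svis (runS d (mj d k j r0) n Nsub t) = mj d k j r0 /\
    forall w, In w (srng (runS d (mj d k j r0) n Nsub t)) -> In (j :: w) (srng (runS d k f (S Nsub) s)).
Proof.
  induction f; intros s t HI Hv.
  - simpl in *. exists 0%nat. simpl. split. apply (Inv_final _ _ _ _ _ _ HI Hv).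
    intros w Hw. apply (Inv_rng _ _ _ _ _ _ HI); auto.
  - destruct (halted k (S Nsub) s) eqn:Hh; [rewrite runS_halted in * by auto|rewrite runS_S in * by auto].
    + exists 0%nat. simpl. split. apply (Inv_final _ _ _ _ _ _ HI Hv).
      intros w Hw. apply (Inv_rng _ _ _ _ _ _ HI); auto.
    + destruct (Inv_step _ _ _ _ _ _ _ HI Hh) as [H1 H2].
      destruct (subj d j s) eqn:Hs.
      * destruct (H1 eq_refl) as [Ht HI'].
        destruct (IHf _ _ HI' Hv) as [n [Hn1 Hn2]].
        exists (S n). rewrite runS_S by auto. auto.
      * apply IHf; auto.
Qed.

Definition valid (d : nat) (s : st) : Prop :=
  match spos s with Some v => Forall (fun a => (a < d)%nat) v | None => True end.

Lemma Forall_removelast (P : nat -> Prop) (v : list nat) : Forall P v -> Forall P (removelast v).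
Proof.
  intros H. destruct v as [|a v]; simpl; auto.
  rewrite (app_removelast_last 0%nat (l := a :: v)) in H by discriminate.
  apply Forall_app in H. tauto.
Qed.

Lemma valid_step d s : (1 <= d)%nat -> valid d s -> valid d (step d s).
Proof.
  intros Hd. unfold valid, step. destruct (spos s) as [v|]; simpl; auto.
  intros Hv. unfold nextpos.
  destruct (Nat.eqb_spec ((srho s v + 1) mod (d + 1)) 0) as [E|E].
  - destruct v as [|a v]; simpl; auto. apply (Forall_removelast _ (a :: v)). auto.
  - simpl. apply Forall_app. split; auto. constructor; auto. lia.
Qed.

Definition phi (d k : nat) (s : st) : nat :=
  match spos s with
  | None => ((d + 2) * (k - svis s))%nat
  | Some _ => ((d + 2) * (k - 1 - svis s) + (d + 1 - srho s nil))%nat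
  end.

Lemma phi_step d k s : (1 <= d)%nat -> valid d s -> (srho s nil <= d)%nat ->
  (spos s = None -> srho s nil = 0%nat) -> (svis s < k)%nat ->
  (exists j0, (j0 < d)%nat /\ subj d j0 s = true /\ (forall j, j <> j0 -> subj d j s = false)
      /\ (phi d k (step d s) <= phi d k s)%nat)
  \/ ((forall j, (j < d)%nat -> subj d j s = false) /\ (phi d k (step d s) < phi d k s)%nat).
Proof.
  intros Hd Hval Hr Hn Hv.
  destruct s as [pos rho v rng]; unfold valid, subj, phi, step in *; simpl in *.
  destruct pos as [[|j' w]|].
  - rewrite (mod_rot d (rho nil)) by lia.
    destruct (Nat.eqb_spec (rho nil) d) as [E|E].
    + right. unfold nextpos; simpl. split.
      * intros j Hj. destruct (d - j)%nat eqn:Ej; [lia|reflexivity].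
      * unfold upd; simpl. lia.
    + left. exists (d - (rho nil + 1))%nat. split; [lia|]. split.
      * apply Nat.eqb_eq. lia.
      * split.
        -- intros j Hj. apply Nat.eqb_neq. lia.
        -- unfold nextpos. destruct (Nat.eqb_spec (rho [] + 1) 0); [lia|]. simpl.
           rewrite upd_eq. lia.
  - left. inversion Hval; subst. exists j'. split; auto. split.
    + apply Nat.eqb_refl.
    + split.
      * intros j Hj. apply Nat.eqb_neq. auto.
      * unfold nextpos.
        destruct (Nat.eqb ((rho (j' :: w) + 1) mod (d + 1)) 0); simpl;
        [destruct w; simpl|]; rewrite upd_neq by discriminate; lia.
  - right. split; [intros; reflexivity|]. simpl. specialize (Hn eq_refl). replace (k - v)%nat with (S (k - 1 - v)) by lia. rewrite Nat.mul_succ_r. lia.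
Qed.

Definition sumf (fs : nat -> nat) (d : nat) : nat := fold_right plus 0%nat (map fs (seq 0 d)).

Lemma sum_upd_gen (fs : nat -> nat) j0 : forall n a, (a <= j0 < a + n)%nat -> (1 <= fs j0)%nat ->
  fold_right plus 0%nat (map fs (seq a n)) =
  S (fold_right plus 0%nat (map (fun j => if Nat.eqb j j0 then (fs j - 1)%nat else fs j) (seq a n))).
Proof.
  induction n; intros a Ha H1; [lia|]. simpl.
  destruct (Nat.eqb_spec a j0).
  - subst. f_equal. 
    assert (map fs (seq (S j0) n) = map (fun j => if Nat.eqb j j0 then (fs j - 1)%nat else fs j) (seq (S j0) n)) as ->.
    { apply map_ext_in. intros j Hj. apply in_seq in Hj. destruct (Nat.eqb_spec j j0); auto; lia. }
    lia.
  - rewrite IHn by lia. lia.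
Qed.

Lemma sum_upd (fs : nat -> nat) d j0 : (j0 < d)%nat -> (1 <= fs j0)%nat ->
  sumf fs d = S (sumf (fun j => if Nat.eqb j j0 then (fs j - 1)%nat else fs j) d).
Proof. intros. unfold sumf. apply sum_upd_gen; lia. Qed.

Lemma Inv_facts d k r0 j s t : Inv d k r0 j s t ->
  (srho s nil <= d)%nat /\ (spos s = None -> srho s nil = 0%nat) /\ (svis s <= k)%nat
  /\ (svis s = k -> spos s = None).
Proof. intros (_&_&_&_&H1&_&H2&H3&H4&_); auto. Qed.

Lemma sim_complete d k r0 Nsub : (1 <= d)%nat -> forall f s (t : nat -> st) (fs : nat -> nat),
  valid d s -> (forall j, (j < d)%nat -> Inv d k r0 j s (t j)) ->
  (forall j, (j < d)%nat -> complete d (mj d k j r0) (fs j) Nsub (t j)) ->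
  (sumf fs d + phi d k s <= f)%nat ->
  complete d k f (S Nsub) s.
Proof.
  intros Hd. induction f; intros s t fs Hval HI Hc Hf.
  - destruct (Inv_facts _ _ _ _ _ _ (HI 0%nat ltac:(lia))) as (Hr & Hn & Hvk & Hvkn).
    unfold complete; simpl. unfold phi in Hf. destruct (spos s); [lia|].
    assert (k - svis s = 0)%nat by nia. lia.
  - destruct (Inv_facts _ _ _ _ _ _ (HI 0%nat ltac:(lia))) as (Hr & Hn & Hvk & Hvkn).
    unfold complete. destruct (halted k (S Nsub) s) eqn:Hh.
    + rewrite runS_halted by auto. unfold halted in Hh.
      destruct (Nat.eqb_spec (svis s) k) as [E|E]; auto. simpl in Hh.
      exfalso. destruct (spos s) as [[|j' w]|] eqn:Hp; [simpl in Hh; discriminate| |discriminate].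
      unfold valid in Hval. rewrite Hp in Hval. inversion Hval; subst.
      destruct (Inv_inside _ _ _ _ _ _ w (HI j' H1) ltac:(lia) Hp) as [Hp' Hlt].
      specialize (Hc j' H1). unfold complete in Hc.
      rewrite runS_halted in Hc. lia.
      unfold halted. rewrite Hp'. simpl in Hh. apply Nat.leb_le in Hh.
      apply Bool.orb_true_iff. right. apply Nat.leb_le. auto.
    + rewrite runS_S by auto.
      assert (Hvlt : (svis s < k)%nat).
      { unfold halted in Hh. apply Bool.orb_false_iff in Hh as [Hh _]. apply Nat.eqb_neq in Hh. lia. }
      destruct (phi_step d k s Hd Hval Hr Hn Hvlt) as [(j0 & Hj0 & Hs0 & Hso & Hph)|(Hso & Hph)].
      * destruct (Inv_step _ _ _ _ _ _ _ (HI j0 Hj0) Hh) as [H1 _].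
        destruct (H1 Hs0) as [Hth HI0].
        assert (Hf0 : (1 <= fs j0)%nat).
        { specialize (Hc j0 Hj0). unfold complete in Hc. destruct (fs j0); [|lia].
          simpl in Hc. unfold halted in Hth. rewrite Hc, Nat.eqb_refl in Hth. discriminate. }
        apply (IHf (step d s) (fun j => if Nat.eqb j j0 then step d (t j0) else t j)
                   (fun j => if Nat.eqb j j0 then (fs j - 1)%nat else fs j)).
        -- apply valid_step; auto.
        -- intros j Hj. destruct (Nat.eqb_spec j j0).
           ++ subst; auto.
           ++ destruct (Inv_step _ _ _ _ _ _ _ (HI j Hj) Hh) as [_ H2]. apply H2. apply Hso. auto.
        -- intros j Hj. destruct (Nat.eqb_spec j j0).
           ++ subst. specialize (Hc j0 Hj). unfold complete in *.
              destruct (fs j0) as [|m]; [lia|]. rewrite runS_S in Hc by auto.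
              replace (S m - 1)%nat with m by lia. auto.
           ++ auto.
        -- rewrite (sum_upd fs d j0) in Hf by auto. lia.
      * apply (IHf (step d s) t fs); auto.
        -- apply valid_step; auto.
        -- intros j Hj. destruct (Inv_step _ _ _ _ _ _ _ (HI j Hj) Hh) as [_ H2]. apply H2. apply Hso. auto.
        -- lia.
Qed.

Definition s0 (c : word -> nat) : st := mkst (Some nil) c 0%nat [nil].
Definition t0 (j : nat) (c : word -> nat) : st := mkst None (shiftc j c) 0%nat [].

Lemma Inv_init d k j c : (j < d)%nat -> (c nil <= d)%nat -> (1 <= k)%nat ->
  Inv d k (c nil) j (s0 c) (t0 j c).
Proof.
  intros Hj Hc Hk. unfold Inv, posrel, s0, t0; simpl.
  repeat split; auto; try lia; try (intros; tauto); try discriminate.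
  - intros [H|H]; [discriminate|auto].
  - unfold cnt, indb. bdestr; simpl; lia.
Qed.

Lemma valid_s0 d c : valid d (s0 c).
Proof. unfold valid, s0; simpl; auto. Qed.

Lemma runS_t0 d m F N j c : (1 <= m)%nat ->
  runS d m (S F) N (t0 j c) = runS d m F N (s0 (shiftc j c)).
Proof.
  intros Hm. rewrite runS_S. reflexivity.
  unfold halted, t0; simpl. destruct m; [lia|reflexivity].
Qed.

Lemma runS_t0_zero d f N j c : runS d 0 f N (t0 j c) = t0 j c.
Proof. apply runS_halted. reflexivity. Qed.

Definition Agr (d N : nat) (s1 s2 : st) : Prop :=
  spos s1 = spos s2 /\ svis s1 = svis s2 /\ srng s1 = srng s2 /\ valid d s1 /\
  (forall w, (length w < N)%nat -> Forall (fun a => (a < d)%nat) w -> srho s1 w = srho s2 w).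

Lemma Agr_step d k N s1 s2 : (1 <= d)%nat -> Agr d N s1 s2 -> halted k N s1 = false ->
  Agr d N (step d s1) (step d s2).
Proof.
  intros Hd (Hp & Hv & Hr & Hval & Hrho) Hh.
  assert (Hval' := valid_step d s1 Hd Hval).
  destruct s1 as [p1 r1 v1 g1], s2 as [p2 r2 v2 g2]; simpl in *; subst.
  unfold step in *; simpl in *. unfold valid in *; simpl in *.
  destruct p2 as [v|].
  - assert (Hlt : (length v < N)%nat).
    { unfold halted in Hh; simpl in Hh. apply Bool.orb_false_iff in Hh as [_ Hh]. apply Nat.leb_gt in Hh. auto. }
    rewrite (Hrho v Hlt Hval) in *.
    destruct (nextpos d v _); simpl in *; repeat split; auto;
      intros w0 Hw Hw'; simpl; unfold upd; destruct (list_eq_dec Nat.eq_dec w0 v); auto.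
  - repeat split; auto.
Qed.

Lemma Agr_run d k f N s1 s2 : (1 <= d)%nat -> Agr d N s1 s2 ->
  Agr d N (runS d k f N s1) (runS d k f N s2).
Proof.
  intros Hd. revert s1 s2; induction f; intros s1 s2 HA; simpl; auto.
  assert (halted k N s1 = halted k N s2) as <-.
  { destruct HA as (Hp & Hv & _). unfold halted. rewrite Hp, Hv. auto. }
  destruct (halted k N s1) eqn:Hh; auto. apply IHf. apply (Agr_step d k); auto.
Qed.

Lemma run_dep d k f N c c' : (1 <= d)%nat ->
  (forall w, (length w < N)%nat -> Forall (fun a => (a < d)%nat) w -> c w = c' w) ->
  run d k f N (Some nil) c 0 [nil] = run d k f N (Some nil) c' 0 [nil].
Proof.
  intros Hd H. rewrite !run_runS.
  assert (HA : Agr d N (mkst (Some nil) c 0 [nil]) (mkst (Some nil) c' 0 [nil])).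
  { unfold Agr, valid; simpl. repeat split; auto. }
  destruct (Agr_run d k f N _ _ Hd HA) as (_&_&Hr&_). auto.
Qed.

Lemma complete_dep d k f N c c' : (1 <= d)%nat ->
  (forall w, (length w < N)%nat -> Forall (fun a => (a < d)%nat) w -> c w = c' w) ->
  complete d k f N (s0 c) <-> complete d k f N (s0 c').
Proof.
  intros Hd H. unfold complete.
  assert (HA : Agr d N (s0 c) (s0 c')).
  { unfold Agr, valid; simpl. repeat split; auto. }
  destruct (Agr_run d k f N _ _ Hd HA) as (_&Hv&_). rewrite Hv. tauto.
Qed.

Definition sub_part (i : nat) (A : list word) : list word :=
  flat_map (fun w => match w with j :: u => if Nat.eqb j i then [u] else [] | [] => [] end) A.

Lemma sub_part_spec i A w : In w (sub_part i A) <-> In (i :: w) A.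
Proof.
  unfold sub_part. rewrite in_flat_map. split.
  - intros [u [Hu Hw]]. destruct u as [|j u]; [destruct Hw|].
    destruct (Nat.eqb_spec j i); [|destruct Hw]. destruct Hw as [Hw|[]]. subst; auto.
  - intros H. exists (i :: w). split; auto. rewrite Nat.eqb_refl. left; auto.
Qed.

Lemma ft_ge A x n m : (n <= ft A x n m)%nat.
Proof. revert n; induction m; intros n; simpl; auto. destruct (in_dec _ _ _); auto. specialize (IHm (S n)); lia. Qed.

Lemma ft_le A x n m : (ft A x n m <= n + m)%nat.
Proof. revert n; induction m; intros n; simpl; try lia. destruct (in_dec _ _ _); try lia. specialize (IHm (S n)); lia. Qed.

Lemma ft_mono A B x n m : (forall w, In w A -> In w B) -> (ft A x n m <= ft B x n m)%nat.
Proof.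
  intros H. revert n; induction m; intros n; simpl; auto.
  destruct (in_dec (list_eq_dec Nat.eq_dec) (prefix x n) A) as [Ha|Ha].
  - destruct (in_dec (list_eq_dec Nat.eq_dec) (prefix x n) B) as [Hb|Hb]; auto. exfalso; auto.
  - apply (ft_ge B x n (S m)) .
Qed.

Lemma ft_mono_m A x n m m' : (m <= m')%nat -> (ft A x n m <= ft A x n m')%nat.
Proof.
  revert n m'; induction m; intros n m' H; simpl.
  - apply ft_ge.
  - destruct m' as [|m']; [lia|]. simpl. destruct (in_dec _ _ _); auto. apply IHm. lia.
Qed.

Lemma prefix_scons i x n : prefix (scons i x) (S n) = i :: prefix x n.
Proof.
  unfold prefix. simpl. f_equal. rewrite <- seq_shift, map_map. reflexivity.
Qed.

Lemma ft_scons A i x n m : ft A (scons i x) (S n) m = S (ft (sub_part i A) x n m).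
Proof.
  revert n; induction m; intros n; simpl; auto.
  rewrite prefix_scons.
  destruct (in_dec (list_eq_dec Nat.eq_dec) (i :: prefix x n) A) as [H|H];
  destruct (in_dec (list_eq_dec Nat.eq_dec) (prefix x n) (sub_part i A)) as [H'|H'].
  - apply IHm.
  - exfalso. apply H'. apply sub_part_spec; auto.
  - exfalso. apply H. apply sub_part_spec; auto.
  - auto.
Qed.

Lemma contour_scons A i x N :
  contour_trunc A (scons i x) (S N) =
  if in_dec (list_eq_dec Nat.eq_dec) [i] A then S (contour_trunc (sub_part i A) x N) else 1%nat.
Proof.
  unfold contour_trunc. destruct N as [|M].
  - simpl. destruct (in_dec _ _ _); auto.
  - simpl. change (prefix (scons i x) 1) with [i].
    destruct (in_dec (list_eq_dec Nat.eq_dec) [i] A); auto.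
    rewrite ft_scons. reflexivity.
Qed.

Lemma contour_mono A B x N : (forall w, In w A -> In w B) ->
  (contour_trunc A x N <= contour_trunc B x N)%nat.
Proof. intros H. destruct N; simpl; auto. apply ft_mono; auto. Qed.

Lemma contour_mono_N A x N N' : (N <= N')%nat -> (contour_trunc A x N <= contour_trunc A x N')%nat.
Proof.
  intros H. destruct N; simpl; [lia|]. destruct N'; [lia|]. simpl. apply ft_mono_m. lia.
Qed.

Lemma contour_le A x N : (contour_trunc A x N <= N)%nat.
Proof. destruct N; simpl; auto. pose proof (ft_le A x 1 N). lia. Qed.

Lemma contour_ge1 A x N : (1 <= N)%nat -> (1 <= contour_trunc A x N)%nat.
Proof. intros H. destruct N; [lia|]. apply ft_ge. Qed.

Definition subc (d m N : nat) (x : nat -> nat) (c : word -> nat) : nat :=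
  if Nat.eqb m 0 then 0%nat else contour_trunc (run d m N N (Some nil) c 0 [nil]) x N.

Lemma path_upper d k N i x c : (i < d)%nat -> (c nil <= d)%nat -> (1 <= k)%nat ->
  (contour_trunc (run d k (S N) (S N) (Some nil) c 0 [nil]) (scons i x) (S N)
   <= 1 + subc d (mj d k i (c nil)) N x (shiftc i c))%nat.
Proof.
  intros Hi Hc Hk. rewrite run_runS. fold (s0 c).
  pose proof (sim_upper d k (c nil) i N (S N) (s0 c) (t0 i c) (S N)
                (Inv_init d k i c Hi Hc Hk) (le_n _)) as H.
  rewrite contour_scons. unfold subc.
  destruct (Nat.eqb_spec (mj d k i (c nil)) 0) as [E|E].
  - rewrite E in H. rewrite runS_t0_zero in H.
    destruct (in_dec _ _ _) as [Hin|Hin]; auto. exfalso. apply (H nil Hin).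
  - destruct (in_dec _ _ _) as [Hin|Hin]; [|lia].
    rewrite runS_t0 in H by lia. rewrite run_runS.
    apply le_n_S. apply contour_mono. intros w Hw. apply H. apply sub_part_spec; auto.
Qed.

Lemma path_lower d k M N i x c : (i < d)%nat -> (c nil <= d)%nat -> (1 <= k)%nat -> (N <= M)%nat ->
  complete d k (S M) (S M) (s0 c) ->
  (1 + subc d (mj d k i (c nil)) N x (shiftc i c)
   <= contour_trunc (run d k (S M) (S M) (Some nil) c 0 [nil]) (scons i x) (S M))%nat.
Proof.
  intros Hi Hc Hk HNM Hcomp. rewrite run_runS. fold (s0 c).
  destruct (sim_lower d k (c nil) i M (S M) (s0 c) (t0 i c) (Inv_init d k i c Hi Hc Hk) Hcomp)
    as [n [Hn1 Hn2]].
  pose proof (runS_reach_stop d _ M (t0 i c) n _ eq_refl Hn1 (S N)) as H3.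
  pose proof (runS_depth_mono d (mj d k i (c nil)) (S N) N M (t0 i c) HNM) as H4.
  unfold subc. rewrite contour_scons.
  destruct (Nat.eqb_spec (mj d k i (c nil)) 0) as [E|E].
  - destruct (in_dec _ _ _); lia.
  - rewrite runS_t0 in H4 by lia. fold (s0 (shiftc i c)) in *.
    assert (Hsub : forall w, In w (srng (runS d (mj d k i (c nil)) N N (s0 (shiftc i c)))) ->
                             In (i :: w) (srng (runS d k (S M) (S M) (s0 c)))).
    { intros w Hw. apply Hn2. apply H3. apply H4. auto. }
    destruct (in_dec _ _ _) as [Hin|Hin].
    + rewrite run_runS. apply le_n_S. fold (s0 (shiftc i c)).
      eapply Nat.le_trans; [|apply contour_mono_N; eassumption].
      apply contour_mono. intros w Hw. apply sub_part_spec. apply Hsub; auto.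
    + exfalso. apply Hin. apply Hsub. apply runS_rng. unfold s0; simpl; auto.
Qed.

Lemma sumf_const d a : sumf (fun _ => a) d = (d * a)%nat.
Proof.
  unfold sumf. induction d; [reflexivity|]. rewrite seq_S, map_app, fold_right_app. simpl.
  rewrite <- IHd. clear IHd.
  assert (forall l b, fold_right plus b l = (fold_right plus 0 l + b)%nat) as ->.
  { induction l; intros; simpl; auto. rewrite IHl. lia. }
  lia.
Qed.

Lemma path_complete d k F c : (1 <= d)%nat -> (c nil <= d)%nat -> (1 <= k)%nat ->
  (forall j, (j < d)%nat -> complete d (mj d k j (c nil)) F F (s0 (shiftc j c))) ->
  complete d k (d * S F + (d + 2) * k) (S F) (s0 c).
Proof.
  intros Hd Hc Hk H.
  apply (sim_complete d k (c nil) F Hd _ (s0 c) (fun j => t0 j c) (fun _ => S F)).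
  - apply valid_s0.
  - intros j Hj. apply Inv_init; auto.
  - intros j Hj. unfold complete.
    destruct (Nat.eqb_spec (mj d k j (c nil)) 0) as [E|E].
    + rewrite E, runS_t0_zero. reflexivity.
    + rewrite runS_t0 by lia. apply H; auto.
  - rewrite sumf_const. unfold phi, s0; simpl. nia.
Qed.
Open Scope R_scope.

Lemma fold_Rplus_shift (l : list R) b : fold_right Rplus b l = fold_right Rplus 0 l + b.
Proof. induction l; simpl; [lra|]. rewrite IHl. lra. Qed.

Lemma sumR_S n f : sumR (S n) f = sumR n f + f n.
Proof. unfold sumR. rewrite seq_S, map_app, fold_right_app. simpl. rewrite fold_Rplus_shift. lra. Qed.

Lemma sumR_0 f : sumR 0 f = 0.
Proof. reflexivity. Qed.

Lemma sumR_ext n f g : (forall j, (j < n)%nat -> f j = g j) -> sumR n f = sumR n g.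
Proof. intros H. induction n; auto. rewrite !sumR_S, IHn, H; auto. Qed.

Lemma sumR_plus n f g : sumR n (fun j => f j + g j) = sumR n f + sumR n g.
Proof. induction n. unfold sumR; simpl; lra. rewrite !sumR_S, IHn. lra. Qed.

Lemma sumR_scal n a f : sumR n (fun j => a * f j) = a * sumR n f.
Proof. induction n. unfold sumR; simpl; lra. rewrite !sumR_S, IHn. lra. Qed.

Lemma sumR_scal_r n a f : sumR n (fun j => f j * a) = sumR n f * a.
Proof. induction n. unfold sumR; simpl; lra. rewrite !sumR_S, IHn. lra. Qed.

Lemma sumR_swap n m (f : nat -> nat -> R) :
  sumR n (fun j => sumR m (fun l => f j l)) = sumR m (fun l => sumR n (fun j => f j l)).
Proof.
  induction n.
  - unfold sumR at 1; simpl. induction m; [reflexivity|]. rewrite sumR_S, <- IHm. unfold sumR; simpl; lra.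
  - rewrite sumR_S, IHn. rewrite <- sumR_plus. apply sumR_ext. intros l _. rewrite sumR_S. lra.
Qed.

Lemma sumR_le n f g : (forall j, (j < n)%nat -> f j <= g j) -> sumR n f <= sumR n g.
Proof.
  intros H. induction n. unfold sumR; simpl; lra. rewrite !sumR_S.
  assert (f n <= g n) by (apply H; lia).
  assert (sumR n f <= sumR n g) by (apply IHn; intros; apply H; lia). lra.
Qed.

Lemma Efin_cons r d v vs F :
  Efin r d (v :: vs) F = sumR (S d) (fun j => r j * Efin r d vs (fun c => F (upd c v j))).
Proof. reflexivity. Qed.

Lemma Efin_ext r d vs F G : (forall c, F c = G c) -> Efin r d vs F = Efin r d vs G.
Proof. intros H. assert (F = G) by (apply functional_extensionality; auto). subst; auto. Qed.

Lemma Efin_const r d vs a : sumR (S d) r = 1 -> Efin r d vs (fun _ => a) = a.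
Proof.
  intros Hs. induction vs; simpl; auto. rewrite IHvs. rewrite sumR_scal_r, Hs. lra.
Qed.

Lemma Efin_plus r d vs F G : Efin r d vs (fun c => F c + G c) = Efin r d vs F + Efin r d vs G.
Proof.
  revert F G; induction vs; intros F G; simpl; auto.
  rewrite <- sumR_plus. apply sumR_ext. intros j _. rewrite IHvs. lra.
Qed.

Lemma Efin_scal r d vs a F : Efin r d vs (fun c => a * F c) = a * Efin r d vs F.
Proof.
  revert F; induction vs; intros F; simpl; auto.
  rewrite <- sumR_scal. apply sumR_ext. intros j _. rewrite IHvs. lra.
Qed.

Lemma Efin_mono_b r d vs F G : (forall j, (j <= d)%nat -> 0 <= r j) ->
  (forall c, (forall w, In w vs -> (c w <= d)%nat) -> F c <= G c) -> Efin r d vs F <= Efin r d vs G.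
Proof.
  intros Hr. revert F G; induction vs as [|v vs IH]; intros F G H; simpl.
  - apply H. intros w [].
  - apply sumR_le. intros j Hj. apply Rmult_le_compat_l. apply Hr; lia.
    apply IH. intros c Hc. apply H. intros w [Hw|Hw].
    + subst. unfold upd. destruct (list_eq_dec Nat.eq_dec w w); [lia|congruence].
    + unfold upd. destruct (list_eq_dec Nat.eq_dec w v); [lia|auto].
Qed.

Lemma Efin_ext_b r d vs F G : (forall j, (j <= d)%nat -> 0 <= r j) ->
  (forall c, (forall w, In w vs -> (c w <= d)%nat) -> F c = G c) -> Efin r d vs F = Efin r d vs G.
Proof.
  intros Hr H. apply Rle_antisym; apply Efin_mono_b; auto; intros c Hc; rewrite (H c Hc); lra.
Qed.

Definition dep (F : (word -> nat) -> R) (P : word -> Prop) : Prop :=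
  forall c c', (forall w, P w -> c w = c' w) -> F c = F c'.

Lemma upd_comm c a b j l : a <> b -> upd (upd c b l) a j = upd (upd c a j) b l.
Proof.
  intros H. apply functional_extensionality. intros w. unfold upd.
  destruct (list_eq_dec Nat.eq_dec w a); destruct (list_eq_dec Nat.eq_dec w b); subst; auto. congruence.
Qed.

Lemma upd_upd c a j l : upd (upd c a l) a j = upd c a j.
Proof.
  apply functional_extensionality. intros w. unfold upd.
  destruct (list_eq_dec Nat.eq_dec w a); auto.
Qed.

Lemma Efin_swap r d a b vs F : Efin r d (a :: b :: vs) F = Efin r d (b :: a :: vs) F.
Proof.
  destruct (list_eq_dec Nat.eq_dec a b) as [E|E]; [subst; auto|].
  rewrite !Efin_cons.
  transitivity (sumR (S d) (fun j => sumR (S d) (fun l => r j * (r l *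
      Efin r d vs (fun c => F (upd (upd c b l) a j)))))).
  - apply sumR_ext. intros j _. rewrite Efin_cons, <- sumR_scal. reflexivity.
  - rewrite sumR_swap. apply sumR_ext. intros l _. rewrite Efin_cons, <- sumR_scal.
    apply sumR_ext. intros j _. assert (Efin r d vs (fun c => F (upd (upd c b l) a j)) = Efin r d vs (fun c => F (upd (upd c a j) b l))) as -> by (apply Efin_ext; intros c; rewrite upd_comm; auto). lra.
Qed.

Lemma Efin_perm r d vs ws F : Permutation vs ws -> Efin r d vs F = Efin r d ws F.
Proof.
  intros Hp. revert F. induction Hp; intros F; auto.
  - rewrite !Efin_cons. apply sumR_ext. intros j _. f_equal. apply IHHp.
  - apply Efin_swap.
  - rewrite IHHp1. apply IHHp2.
Qed.

Lemma Efin_dup2 r d v vs F : sumR (S d) r = 1 -> Efin r d (v :: v :: vs) F = Efin r d (v :: vs) F.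
Proof.
  intros Hs. rewrite !Efin_cons. apply sumR_ext. intros j _. f_equal.
  rewrite Efin_cons.
  transitivity (sumR (S d) (fun l => r l * Efin r d vs (fun c => F (upd c v j)))).
  - apply sumR_ext. intros l _. f_equal. apply Efin_ext. intros c. rewrite upd_upd. auto.
  - rewrite sumR_scal_r, Hs. lra.
Qed.

Lemma Efin_dup r d v vs F : sumR (S d) r = 1 -> In v vs -> Efin r d (v :: vs) F = Efin r d vs F.
Proof.
  intros Hs Hin. destruct (in_split v vs Hin) as [l1 [l2 ->]].
  assert (Hp : Permutation (l1 ++ v :: l2) (v :: l1 ++ l2)) by (symmetry; apply Permutation_middle).
  rewrite (Efin_perm r d _ _ F Hp).
  rewrite (Efin_perm r d (v :: l1 ++ v :: l2) (v :: v :: l1 ++ l2) F) by (constructor; auto).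
  apply Efin_dup2; auto.
Qed.

Lemma Efin_nodup r d vs F : sumR (S d) r = 1 ->
  Efin r d vs F = Efin r d (nodup (list_eq_dec Nat.eq_dec) vs) F.
Proof.
  intros Hs. revert F; induction vs as [|v vs IH]; intros F; auto.
  change (nodup (list_eq_dec Nat.eq_dec) (v :: vs)) with
    (if in_dec (list_eq_dec Nat.eq_dec) v vs then nodup (list_eq_dec Nat.eq_dec) vs
     else v :: nodup (list_eq_dec Nat.eq_dec) vs).
  destruct (in_dec (list_eq_dec Nat.eq_dec) v vs) as [H|H].
  - rewrite Efin_dup; auto.
  - rewrite !Efin_cons. apply sumR_ext. intros j _. f_equal. apply IH.
Qed.

Lemma Efin_set r d vs ws F : sumR (S d) r = 1 -> (forall w, In w vs <-> In w ws) ->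
  Efin r d vs F = Efin r d ws F.
Proof.
  intros Hs H. rewrite (Efin_nodup r d vs), (Efin_nodup r d ws) by auto.
  apply Efin_perm. apply NoDup_Permutation; try apply NoDup_nodup.
  intros w. rewrite !nodup_In. auto.
Qed.

Lemma Efin_app_dep r d ws vs F : sumR (S d) r = 1 -> dep F (fun w => In w ws) ->
  Efin r d (ws ++ vs) F = Efin r d ws F.
Proof.
  intros Hs. revert F; induction ws as [|w ws IH]; intros F HF; simpl.
  - transitivity (Efin r d vs (fun _ => F (fun _ => 0%nat))).
    + apply Efin_ext. intros c. apply HF. intros w [].
    + apply Efin_const; auto.
  - apply sumR_ext. intros j _. f_equal. apply IH.
    intros c c' H. apply HF. intros u Hu. unfold upd.
    destruct (list_eq_dec Nat.eq_dec u w); auto. destruct Hu; [congruence|auto].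
Qed.

Lemma Efin_restrict r d vs ws F : sumR (S d) r = 1 -> incl ws vs -> dep F (fun w => In w ws) ->
  Efin r d vs F = Efin r d ws F.
Proof.
  intros Hs Hi HF. rewrite (Efin_set r d vs (ws ++ vs)); auto.
  - apply Efin_app_dep; auto.
  - intros w. rewrite in_app_iff. split; auto. intros [H|H]; auto.
Qed.

Lemma Efin_prod r d ws1 ws2 F1 F2 : sumR (S d) r = 1 ->
  (forall w, In w ws1 -> ~ In w ws2) ->
  dep F1 (fun w => In w ws1) -> dep F2 (fun w => In w ws2) ->
  Efin r d (ws1 ++ ws2) (fun c => F1 c * F2 c) = Efin r d ws1 F1 * Efin r d ws2 F2.
Proof.
  intros Hs. revert F1; induction ws1 as [|w ws IH]; intros F1 Hd H1 H2; simpl.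
  - transitivity (Efin r d ws2 (fun c => F1 (fun _ => 0%nat) * F2 c)).
    + apply Efin_ext. intros c. f_equal. apply H1. intros u [].
    + apply Efin_scal.
  - rewrite <- sumR_scal_r. apply sumR_ext. intros j _.
    rewrite Rmult_assoc. f_equal.
    transitivity (Efin r d (ws ++ ws2) (fun c => F1 (upd c w j) * F2 c)).
    + apply Efin_ext. intros c. f_equal. apply H2. intros u Hu. unfold upd.
      destruct (list_eq_dec Nat.eq_dec u w); auto. subst. exfalso. apply (Hd w); simpl; auto.
    + apply IH; auto.
      * intros u Hu. apply Hd. simpl; auto.
      * intros c c' H. apply H1. intros u Hu. unfold upd.
        destruct (list_eq_dec Nat.eq_dec u w); auto. destruct Hu; [congruence|auto].
Qed.

Lemma shiftc_upd j c v l : shiftc j (upd c (j :: v) l) = upd (shiftc j c) v l.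
Proof.
  apply functional_extensionality. intros w. unfold shiftc, upd.
  destruct (list_eq_dec Nat.eq_dec (j :: w) (j :: v)); destruct (list_eq_dec Nat.eq_dec w v);
    subst; auto; try congruence.
Qed.

Lemma Efin_shift r d j L K :
  Efin r d (map (cons j) L) (fun c => K (shiftc j c)) = Efin r d L K.
Proof.
  revert K; induction L as [|v L IH]; intros K; auto.
  cbn [map]. rewrite !Efin_cons.
  apply sumR_ext. intros l _. f_equal.
  rewrite <- (IH (fun c => K (upd c v l))). apply Efin_ext. intros c. rewrite shiftc_upd. auto.
Qed.

Definition validw (d : nat) (w : word) : Prop := Forall (fun a => (a < d)%nat) w.

Lemma words_len_spec d n w : In w (words_len d n) <-> length w = n /\ validw d w.
Proof.
  unfold validw. revert w; induction n; intros w; simpl.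
  - split. intros [H|[]]; subst; simpl; auto. intros [H _]. destruct w; [auto|discriminate].
  - rewrite in_flat_map. split.
    + intros [u [Hu Hw]]. apply in_map_iff in Hw as [a [Ha Hin]]. subst.
      apply IHn in Hu as [Hl Hv]. apply in_seq in Hin.
      rewrite length_app. simpl. split; [lia|]. apply Forall_app. split; auto. constructor; auto; lia.
    + intros [Hl Hv]. destruct w as [|b w0]; [discriminate|].
      exists (removelast (b :: w0)).
      pose proof (app_removelast_last 0%nat (l := b :: w0) ltac:(discriminate)) as E.
      split.
      * apply IHn. split.
        -- assert (Hl2 : length (b :: w0) = S (length (removelast (b :: w0)))) by (rewrite E at 1; rewrite length_app, Nat.add_comm; reflexivity). lia.
        -- rewrite E in Hv. apply Forall_app in Hv. tauto.
      * apply in_map_iff. exists (last (b :: w0) 0%nat). split; [symmetry; auto|].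
        apply in_seq. rewrite E in Hv. apply Forall_app in Hv as [_ Hv]. apply Forall_inv in Hv. lia.
Qed.

Lemma words_upto_spec d N w : In w (words_upto d N) <-> (length w < N)%nat /\ validw d w.
Proof.
  unfold words_upto. rewrite in_flat_map. split.
  - intros [n [Hn Hw]]. apply in_seq in Hn. apply words_len_spec in Hw as [Hw1 Hw2]. split; [lia|auto].
  - intros [Hl Hv]. exists (length w). split. apply in_seq; lia. apply words_len_spec; auto.
Qed.

Lemma nil_in_words d N : (1 <= N)%nat -> In nil (words_upto d N).
Proof. intros H. apply words_upto_spec. split; simpl; [lia|constructor]. Qed.

Lemma words_upto_incl d N N' : (N <= N')%nat -> incl (words_upto d N) (words_upto d N').
Proof. intros H w Hw. apply words_upto_spec in Hw. apply words_upto_spec. destruct Hw; split; [lia|auto]. Qed.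

Lemma cons_in_words d N j w : (j < d)%nat -> In w (words_upto d N) -> In (j :: w) (words_upto d (S N)).
Proof. intros Hj Hw. apply words_upto_spec in Hw as [H1 H2]. apply words_upto_spec. simpl. split; [lia|constructor; auto]. Qed.

Definition Fk (d k N : nat) (x : nat -> nat) (c : word -> nat) : R :=
  INR (contour_trunc (run d k N N (Some nil) c 0 [nil]) x N).

Lemma Etrunc_Fk r d k x N : Etrunc r d k x N = Efin r d (words_upto d N) (Fk d k N x).
Proof. reflexivity. Qed.

Lemma Fk_dep d k N x : (1 <= d)%nat -> dep (Fk d k N x) (fun w => In w (words_upto d N)).
Proof.
  intros Hd c c' H. unfold Fk. rewrite (run_dep d k N N c c'); auto.
  intros w Hl Hv. apply H. apply words_upto_spec; auto.
Qed.

Lemma Fk_mono d k N x c : (Fk d k N x c <= Fk d k (S N) x c)%R.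
Proof.
  unfold Fk. apply le_INR. eapply Nat.le_trans; [apply contour_mono_N with (N' := S N); lia|].
  apply contour_mono. intros w Hw. rewrite !run_runS in *.
  apply (runS_depth_mono d k (S N) N (S N)); [lia|].
  apply (runS_fuel_mono d k N (S N)); [lia|]. auto.
Qed.

Lemma Etrunc_mono_S r d k x N : (1 <= d)%nat -> (forall j, (j <= d)%nat -> 0 <= r j) -> sumR (S d) r = 1 ->
  Etrunc r d k x N <= Etrunc r d k x (S N).
Proof.
  intros Hd Hr Hs. rewrite !Etrunc_Fk.
  rewrite <- (Efin_restrict r d (words_upto d (S N)) (words_upto d N) (Fk d k N x)); auto.
  - apply Efin_mono_b; auto. intros c _. apply Fk_mono.
  - apply words_upto_incl; lia.
  - apply Fk_dep; auto.
Qed.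

Lemma Etrunc_mono r d k x N N' : (1 <= d)%nat -> (forall j, (j <= d)%nat -> 0 <= r j) -> sumR (S d) r = 1 ->
  (N <= N')%nat -> Etrunc r d k x N <= Etrunc r d k x N'.
Proof.
  intros Hd Hr Hs H. induction H; [lra|]. eapply Rle_trans; [apply IHle|]. apply Etrunc_mono_S; auto.
Qed.

Definition Gk (d k i N : nat) (x : nat -> nat) (c : word -> nat) : R :=
  INR (1 + subc d (mj d k i (c nil)) N x (shiftc i c)).

Definition T (r : nat -> R) (d m : nat) (x : nat -> nat) (N : nat) : R :=
  if Nat.eqb m 0 then 0 else Etrunc r d m x N.

Lemma sumR_split n t f g : (t <= n)%nat ->
  sumR n (fun j => if Nat.ltb j t then f j else g j) = sumR t f + (sumR n g - sumR t g).
Proof.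
  intros H. induction H.
  - rewrite (sumR_ext t _ f). lra. intros j Hj. destruct (Nat.ltb_spec j t); auto; lia.
  - rewrite !sumR_S, IHle. destruct (Nat.ltb_spec m t); [lia|]. lra.
Qed.

Lemma subc_dep d m N x : (1 <= d)%nat -> dep (fun c => INR (subc d m N x c)) (fun w => In w (words_upto d N)).
Proof.
  intros Hd c c' H. unfold subc. destruct (Nat.eqb m 0); auto.
  rewrite (run_dep d m N N c c'); auto. intros w Hl Hv. apply H. apply words_upto_spec; auto.
Qed.

Lemma shiftc_upd_nil j c rho : shiftc j (upd c nil rho) = shiftc j c.
Proof. apply functional_extensionality. intros w. unfold shiftc. apply upd_neq. discriminate. Qed.

Lemma Efin_subc r d m N x : (1 <= d)%nat -> sumR (S d) r = 1 ->
  Efin r d (words_upto d N) (fun c => INR (subc d m N x c)) = T r d m x N.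
Proof.
  intros Hd Hs. unfold T, subc. destruct (Nat.eqb m 0).
  - apply Efin_const; auto.
  - reflexivity.
Qed.

Lemma EG r d k i N M x : (1 <= d)%nat -> (i < d)%nat -> sumR (S d) r = 1 -> (S N <= M)%nat ->
  Efin r d (words_upto d M) (Gk d k i N x) =
  1 + p r (d - i) * T r d k x N + (1 - p r (d - i)) * T r d (k - 1) x N.
Proof.
  intros Hd Hi Hs HM.
  rewrite (Efin_restrict r d _ (nil :: map (cons i) (words_upto d N))); auto.
  - rewrite Efin_cons.
    transitivity (sumR (S d) (fun rho => r rho * (1 + T r d (mj d k i rho) x N))).
    + apply sumR_ext. intros rho _. f_equal.
      transitivity (Efin r d (map (cons i) (words_upto d N))
                      (fun c => (fun c' => 1 + INR (subc d (mj d k i rho) N x c')) (shiftc i c))).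
      * apply Efin_ext. intros c. unfold Gk. rewrite upd_eq, shiftc_upd_nil.
        rewrite plus_INR. simpl. lra.
      * rewrite (Efin_shift r d i (words_upto d N) (fun c' => 1 + INR (subc d (mj d k i rho) N x c'))), Efin_plus, Efin_const, Efin_subc; auto.
    + transitivity (sumR (S d) r + sumR (S d) (fun rho =>
          if Nat.ltb rho (d - i) then r rho * T r d k x N else r rho * T r d (k - 1) x N)).
      * rewrite <- sumR_plus. apply sumR_ext. intros rho _. unfold mj.
        destruct (Nat.ltb rho (d - i)); lra.
      * rewrite sumR_split by lia. rewrite !sumR_scal_r, Hs. unfold p. lra.
  - intros w [Hw|Hw].
    + subst. apply nil_in_words. lia.
    + apply in_map_iff in Hw as [u [Hu Hin]]. subst.
      apply (words_upto_incl d (S N) M); auto. apply cons_in_words; auto.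
  - intros c c' H. unfold Gk. rewrite (H nil) by (left; auto).
    rewrite !plus_INR. f_equal. apply (subc_dep d _ N x Hd).
    intros w Hw. unfold shiftc. apply H. right. apply in_map; auto.
Qed.

Lemma UB r d k i N x : (1 <= d)%nat -> (i < d)%nat -> (1 <= k)%nat ->
  (forall j, (j <= d)%nat -> 0 <= r j) -> sumR (S d) r = 1 ->
  Etrunc r d k (scons i x) (S N) <=
  1 + p r (d - i) * T r d k x N + (1 - p r (d - i)) * T r d (k - 1) x N.
Proof.
  intros Hd Hi Hk Hr Hs. rewrite <- (EG r d k i N (S N) x); auto. rewrite Etrunc_Fk.
  apply Efin_mono_b; auto. intros c Hc. unfold Fk, Gk. apply le_INR.
  apply path_upper; auto. apply Hc. apply nil_in_words; lia.
Qed.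

Definition Ind (d m F : nat) (c : word -> nat) : R :=
  if Nat.eqb (svis (runS d m F F (s0 c))) m then 1 else 0.

Definition q (r : nat -> R) (d m F : nat) : R := Efin r d (words_upto d F) (Ind d m F).

Lemma Ind_01 d m F c : Ind d m F c = 0 \/ Ind d m F c = 1.
Proof. unfold Ind. destruct (Nat.eqb _ _); auto. Qed.

Lemma Ind_dep d m F : (1 <= d)%nat -> dep (Ind d m F) (fun w => In w (words_upto d F)).
Proof.
  intros Hd c c' H. unfold Ind.
  pose proof (complete_dep d m F F c c' Hd) as H'. unfold complete in H'.
  destruct (Nat.eqb_spec (svis (runS d m F F (s0 c))) m);
  destruct (Nat.eqb_spec (svis (runS d m F F (s0 c'))) m); auto; exfalso.
  - apply n. apply H'; auto. intros w Hl Hv. apply H. apply words_upto_spec; auto.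
  - apply n. apply H'; auto. intros w Hl Hv. apply H. apply words_upto_spec; auto.
Qed.

Lemma LB r d k i N M x : (1 <= d)%nat -> (i < d)%nat -> (1 <= k)%nat -> (N <= M)%nat ->
  (forall j, (j <= d)%nat -> 0 <= r j) -> sumR (S d) r = 1 ->
  1 + p r (d - i) * T r d k x N + (1 - p r (d - i)) * T r d (k - 1) x N
    - INR (S N) * (1 - q r d k (S M))
  <= Etrunc r d k (scons i x) (S M).
Proof.
  intros Hd Hi Hk HNM Hr Hs. rewrite <- (EG r d k i N (S M) x); auto; [|lia].
  unfold q. rewrite Etrunc_Fk.
  transitivity (Efin r d (words_upto d (S M))
     (fun c => Gk d k i N x c + (- INR (S N) * 1 + INR (S N) * Ind d k (S M) c))).
  - rewrite Efin_plus, Efin_plus, Efin_const, Efin_scal; auto. lra.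
  - apply Efin_mono_b; auto. intros c Hc.
    assert (Hc0 : (c nil <= d)%nat) by (apply Hc; apply nil_in_words; lia).
    unfold Ind. destruct (Nat.eqb_spec (svis (runS d k (S M) (S M) (s0 c))) k) as [E|E].
    + unfold Fk, Gk. rewrite Rmult_1_r, Rmult_1_r, Rplus_opp_l, Rplus_0_r. apply le_INR.
      apply path_lower; auto.
    + assert (Gk d k i N x c <= INR (S N)).
      { unfold Gk, subc. apply le_INR. destruct (Nat.eqb _ 0); [lia|].
        pose proof (contour_le (run d (mj d k i (c nil)) N N (Some nil) (shiftc i c) 0 [nil]) x N). lia. }
      assert (0 <= Fk d k (S M) (scons i x) c) by (unfold Fk; apply pos_INR).
      lra.
Qed.

Lemma q_bounds r d m F : (forall j, (j <= d)%nat -> 0 <= r j) -> sumR (S d) r = 1 ->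
  0 <= q r d m F <= 1.
Proof.
  intros Hr Hs. unfold q. split.
  - rewrite <- (Efin_const r d (words_upto d F) 0 Hs). apply Efin_mono_b; auto.
    intros c _. destruct (Ind_01 d m F c) as [-> | ->]; lra.
  - rewrite <- (Efin_const r d (words_upto d F) 1 Hs). apply Efin_mono_b; auto.
    intros c _. destruct (Ind_01 d m F c) as [-> | ->]; lra.
Qed.

Lemma q_mono r d m F F' : (1 <= d)%nat -> (forall j, (j <= d)%nat -> 0 <= r j) -> sumR (S d) r = 1 ->
  (F <= F')%nat -> q r d m F <= q r d m F'.
Proof.
  intros Hd Hr Hs HF. unfold q.
  rewrite <- (Efin_restrict r d (words_upto d F') (words_upto d F) (Ind d m F)); auto.
  - apply Efin_mono_b; auto. intros c _. unfold Ind.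
    destruct (Nat.eqb_spec (svis (runS d m F F (s0 c))) m) as [E|E].
    + assert (complete d m F' F' (s0 c)) as E' by (apply (complete_mono' d m F F' F F'); auto).
      unfold complete in E'. rewrite E', Nat.eqb_refl. lra.
    + destruct (Nat.eqb _ _); lra.
  - apply words_upto_incl; auto.
  - apply Ind_dep; auto.
Qed.

Lemma q_zero r d F : sumR (S d) r = 1 -> q r d 0 F = 1.
Proof.
  intros Hs. unfold q. rewrite <- (Efin_const r d (words_upto d F) 1 Hs).
  apply Efin_ext. intros c. unfold Ind. destruct F; reflexivity.
Qed.

Definition prodR (js : list nat) (f : nat -> R) : R := fold_right Rmult 1 (map f js).

Lemma prodR_ext js f g : (forall j, In j js -> f j = g j) -> prodR js f = prodR js g.
Proof. intros H. unfold prodR. f_equal. apply map_ext_in. auto. Qed.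

Lemma prod01 js f : (forall j, In j js -> f j = 0 \/ f j = 1) ->
  prodR js f = 0 \/ (prodR js f = 1 /\ forall j, In j js -> f j = 1).
Proof.
  induction js as [|j js IH]; intros H; unfold prodR in *; simpl.
  - right. split; auto. intros j [].
  - destruct (H j (or_introl eq_refl)) as [E|E]; rewrite E.
    + left. lra.
    + destruct IH as [E'|[E' H']]. intros; apply H; simpl; auto.
      * left. rewrite E'. lra.
      * right. rewrite E'. split. lra. intros j' [<-|Hj']; auto.
Qed.

Lemma Efin_children r d L js (K : nat -> (word -> nat) -> R) : sumR (S d) r = 1 -> NoDup js ->
  (forall j, dep (K j) (fun w => In w L)) ->
  Efin r d (flat_map (fun j => map (cons j) L) js) (fun c => prodR js (fun j => K j (shiftc j c)))
  = prodR js (fun j => Efin r d L (K j)).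
Proof.
  intros Hs Hnd HK. induction js as [|j js IH]; simpl.
  - reflexivity.
  - inversion Hnd; subst.
    change (prodR (j :: js) (fun j0 => Efin r d L (K j0))) with
      (Efin r d L (K j) * prodR js (fun j0 => Efin r d L (K j0))).
    rewrite <- IH by auto.
    rewrite <- (Efin_shift r d j L (K j)).
    rewrite <- Efin_prod; auto.
    + intros w Hw Hw'. apply in_map_iff in Hw as [u [<- _]].
      apply in_flat_map in Hw' as [j' [Hj' Hw']]. apply in_map_iff in Hw' as [u' [E _]].
      inversion E; subst. auto.
    + intros c c' H. apply (HK j). intros w Hw. unfold shiftc. apply H. apply in_map; auto.
    + intros c c' H. apply prodR_ext. intros j' Hj'. apply (HK j'). intros w Hw.
      unfold shiftc. apply H. apply in_flat_map. exists j'. split; auto. apply in_map; auto.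
Qed.

Lemma prodR_const js B : prodR js (fun _ => B) = B ^ length js.
Proof. induction js; unfold prodR in *; simpl; auto. rewrite IHjs. auto. Qed.

Lemma prodR_seq_S n f : prodR (seq 0 (S n)) f = f 0%nat * prodR (seq 0 n) (fun j => f (S j)).
Proof. unfold prodR. simpl. rewrite <- seq_shift, map_map. reflexivity. Qed.

Lemma prod_pow n rho A B : (rho <= n)%nat ->
  prodR (seq 0 n) (fun j => if Nat.ltb rho (n - j) then A else B) = A ^ (n - rho) * B ^ rho.
Proof.
  revert rho; induction n; intros rho H.
  - replace rho with 0%nat by lia. simpl. unfold prodR; simpl. lra.
  - rewrite prodR_seq_S. destruct (Nat.eq_dec rho (S n)) as [E|E].
    + subst. rewrite Nat.sub_diag. destruct (Nat.ltb_spec (S n) (S n - 0)); [lia|].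
      rewrite (prodR_ext _ _ (fun _ => B)).
      * rewrite prodR_const, length_seq. simpl. lra.
      * intros j Hj. apply in_seq in Hj. destruct (Nat.ltb_spec (S n) (S n - S j)); auto; lia.
    + destruct (Nat.ltb_spec rho (S n - 0)); [|lia].
      replace (S n - rho)%nat with (S (n - rho)) by lia.
      rewrite (prodR_ext _ _ (fun j => if Nat.ltb rho (n - j) then A else B)).
      * rewrite IHn by lia. simpl. lra.
      * intros j _. simpl. reflexivity.
Qed.

Lemma Rec r d m F : (1 <= d)%nat -> (1 <= m)%nat ->
  (forall j, (j <= d)%nat -> 0 <= r j) -> sumR (S d) r = 1 ->
  sumR (S d) (fun rho => r rho * (q r d m F ^ (d - rho) * q r d (m - 1) F ^ rho))
  <= q r d m (d * S F + (d + 2) * m).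
Proof.
  intros Hd Hm Hr Hs. set (M := (d * S F + (d + 2) * m)%nat).
  assert (HFM : (S F <= M)%nat) by (unfold M; nia).
  set (Prod := fun c => prodR (seq 0 d) (fun j => Ind d (mj d m j (c nil)) F (shiftc j c))).
  transitivity (Efin r d (words_upto d M) Prod).
  - rewrite (Efin_restrict r d _ (nil :: flat_map (fun j => map (cons j) (words_upto d F)) (seq 0 d))); auto.
    + rewrite Efin_cons. apply Req_le. apply sumR_ext. intros rho Hrho. f_equal.
      transitivity (Efin r d (flat_map (fun j => map (cons j) (words_upto d F)) (seq 0 d))
        (fun c => prodR (seq 0 d) (fun j => Ind d (mj d m j rho) F (shiftc j c)))).
      * rewrite (Efin_children r d (words_upto d F) (seq 0 d) (fun j => Ind d (mj d m j rho) F)); auto.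
        -- unfold q. rewrite <- (prod_pow d rho) by lia. apply prodR_ext. intros j _. unfold mj. destruct (Nat.ltb rho (d - j)); reflexivity.
        -- apply seq_NoDup.
        -- intros j. apply Ind_dep; auto.
      * apply Efin_ext. intros c. unfold Prod. rewrite upd_eq. apply prodR_ext.
        intros j _. rewrite shiftc_upd_nil. reflexivity.
    + intros w [Hw|Hw].
      * subst. apply nil_in_words. lia.
      * apply in_flat_map in Hw as [j [Hj Hw]]. apply in_map_iff in Hw as [u [<- Hu]].
        apply in_seq in Hj. apply (words_upto_incl d (S F) M); auto. apply cons_in_words; auto. lia.
    + intros c c' H. unfold Prod. rewrite (H nil) by (left; auto). apply prodR_ext.
      intros j Hj. apply Ind_dep; auto. intros w Hw. unfold shiftc. apply H. right.
      apply in_flat_map. exists j. split; auto. apply in_map; auto.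
  - unfold q. apply Efin_mono_b; auto. intros c Hc.
    assert (Hc0 : (c nil <= d)%nat) by (apply Hc; apply nil_in_words; lia).
    unfold Prod. destruct (prod01 (seq 0 d) (fun j => Ind d (mj d m j (c nil)) F (shiftc j c)))
      as [E|[E H1]].
    + intros j _. apply Ind_01.
    + rewrite E. unfold Ind. destruct (Nat.eqb _ _); lra.
    + rewrite E. unfold Ind.
      assert (complete d m M M (s0 c)) as Hcomp.
      { apply (complete_mono' d m (d * S F + (d + 2) * m) M (S F) M); [unfold M; lia | lia |].
        apply path_complete; auto.
        intros j Hj. specialize (H1 j ltac:(apply in_seq; lia)). unfold Ind in H1.
        unfold complete. destruct (Nat.eqb_spec (svis (runS d (mj d m j (c nil)) F F (s0 (shiftc j c)))) (mj d m j (c nil))); auto.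
        lra. }
      unfold complete in Hcomp. rewrite Hcomp, Nat.eqb_refl. lra.
Qed.

Lemma pow_01 a n : 0 <= a <= 1 -> 0 <= a ^ n <= 1.
Proof.
  intros H. induction n; simpl; [lra|]. split; [apply Rmult_le_pos; lra|].
  assert (a * a ^ n <= 1 * 1) by (apply Rmult_le_compat; lra). lra.
Qed.

Lemma pow_anti a n m : 0 <= a <= 1 -> (n <= m)%nat -> a ^ m <= a ^ n.
Proof.
  intros Ha H. induction H; [lra|]. simpl. pose proof (pow_01 a m Ha).
  assert (a * a ^ m <= 1 * a ^ m) by (apply Rmult_le_compat_r; lra). lra.
Qed.

Lemma bernoulli b n : 0 <= b <= 1 -> 1 - INR n * (1 - b) <= b ^ n.
Proof.
  intros Hb. induction n; [simpl; lra|]. rewrite S_INR. change (b ^ S n) with (b * b ^ n).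
  destruct (pow_01 b n Hb).
  assert (b * (1 - INR n * (1 - b)) <= b * b ^ n) by (apply Rmult_le_compat_l; lra).
  assert (0 <= INR n) by apply pos_INR. nra.
Qed.

Lemma pow_bound1 a e : 0 <= a <= 1 ->
  1 - INR (S e) * (1 - a) + INR e * (1 - a) ^ 2 <= a ^ (S e).
Proof.
  intros Ha. induction e.
  - simpl. lra.
  - rewrite !S_INR in *. change (a ^ S (S e)) with (a * a ^ (S e)).
    assert (0 <= INR e) by apply pos_INR.
    assert (a * (1 - (INR e + 1) * (1 - a) + INR e * (1 - a) ^ 2) <= a * a ^ (S e))
      by (apply Rmult_le_compat_l; lra).
    assert (0 <= INR e * (1 - a) ^ 2 * a) by (apply Rmult_le_pos; [apply Rmult_le_pos; [lra|apply pow_le; lra]|lra]).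
    simpl in *. nra.
Qed.

Lemma pow_bound a e : 0 <= a <= 1 ->
  1 - INR e * (1 - a) + (INR e - 1) * (1 - a) ^ 2 + (if Nat.eqb e 0 then (1 - a) ^ 2 else 0) <= a ^ e.
Proof.
  intros Ha. destruct e as [|e].
  - simpl. lra.
  - pose proof (pow_bound1 a e Ha). rewrite S_INR in *.
    replace (Nat.eqb (S e) 0) with false by reflexivity. lra.
Qed.

Lemma sumR_ge0 n f : (forall j, (j < n)%nat -> 0 <= f j) -> 0 <= sumR n f.
Proof. intros H. induction n; [unfold sumR; simpl; lra|]. rewrite sumR_S. assert (0 <= f n) by (apply H; lia). assert (0 <= sumR n f) by (apply IHn; intros; apply H; lia). lra. Qed.

Lemma phi_bound r d a : (1 <= d)%nat -> (forall j, (j <= d)%nat -> 0 <= r j) -> sumR (S d) r = 1 ->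
  INR (d - 1) <= sumR (S d) (fun j => INR j * r j) -> 0 <= a <= 1 ->
  a + r d * (1 - a) ^ 2 <= sumR (S d) (fun rho => r rho * a ^ (d - rho)).
Proof.
  intros Hd Hr Hs Hm Ha. set (t := 1 - a).
  set (mu := sumR (S d) (fun rho => r rho * INR (d - rho))).
  assert (Hmu : mu <= 1).
  { unfold mu. rewrite (sumR_ext (S d) _ (fun rho => INR d * r rho + (-1) * (INR rho * r rho))).
    - rewrite sumR_plus, sumR_scal, sumR_scal, Hs. rewrite minus_INR in Hm by lia. simpl in Hm. lra.
    - intros j Hj. rewrite minus_INR by lia. lra. }
  assert (Hind : sumR (S d) (fun rho => r rho * (if Nat.eqb (d - rho) 0 then t ^ 2 else 0)) = r d * t ^ 2).
  { rewrite sumR_S. rewrite Nat.sub_diag. simpl.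
    rewrite (sumR_ext d _ (fun _ => 0 * 0)). rewrite sumR_scal. lra.
    intros j Hj. destruct (Nat.eqb_spec (d - j) 0); [lia|]. lra. }
  assert (Hlow : sumR (S d) (fun rho => r rho * (1 - INR (d - rho) * t + (INR (d - rho) - 1) * t ^ 2
                   + (if Nat.eqb (d - rho) 0 then t ^ 2 else 0)))
                 <= sumR (S d) (fun rho => r rho * a ^ (d - rho))).
  { apply sumR_le. intros j Hj. apply Rmult_le_compat_l. apply Hr; lia. apply pow_bound; auto. }
  rewrite (sumR_ext (S d) (fun rho => r rho * (1 - INR (d - rho) * t + (INR (d - rho) - 1) * t ^ 2
                   + (if Nat.eqb (d - rho) 0 then t ^ 2 else 0)))
     (fun rho => (r rho + ((-t) * (r rho * INR (d - rho)) + (t ^ 2 * (r rho * INR (d - rho)) + (- t ^ 2) * r rho)))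
                 + r rho * (if Nat.eqb (d - rho) 0 then t ^ 2 else 0))) in Hlow
    by (intros; ring).
  rewrite sumR_plus, sumR_plus, sumR_plus, sumR_plus, !sumR_scal, Hind, Hs in Hlow. fold mu in Hlow.
  assert (0 <= t <= 1) by (unfold t; lra).
  assert (a = 1 - t) by (unfold t; lra).
  assert (0 <= t * (1 - t) * (1 - mu)) by (apply Rmult_le_pos; [apply Rmult_le_pos|]; lra).
  simpl in *. nra.
Qed.

Lemma mix_bound r d a b : (1 <= d)%nat -> (forall j, (j <= d)%nat -> 0 <= r j) -> sumR (S d) r = 1 ->
  0 <= a <= 1 -> 0 <= b <= 1 ->
  sumR (S d) (fun rho => r rho * a ^ (d - rho)) - INR d * (1 - b)
  <= sumR (S d) (fun rho => r rho * (a ^ (d - rho) * b ^ rho)).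
Proof.
  intros Hd Hr Hs Ha Hb. set (phi := sumR (S d) (fun rho => r rho * a ^ (d - rho))).
  assert (H1 : b ^ d * phi <= sumR (S d) (fun rho => r rho * (a ^ (d - rho) * b ^ rho))).
  { unfold phi. rewrite <- sumR_scal. apply sumR_le. intros j Hj.
    pose proof (pow_01 a (d - j) Ha). pose proof (pow_anti b j d Hb ltac:(lia)).
    pose proof (Hr j ltac:(lia)).
    assert (0 <= r j * a ^ (d - j)) by (apply Rmult_le_pos; lra).
    replace (r j * (a ^ (d - j) * b ^ j)) with ((r j * a ^ (d - j)) * b ^ j) by ring.
    rewrite Rmult_comm. apply Rmult_le_compat_l; lra. }
  assert (H2 : 0 <= phi <= 1).
  { unfold phi. split.
    - apply sumR_ge0. intros j Hj. pose proof (pow_01 a (d - j) Ha). pose proof (Hr j ltac:(lia)). nra.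
    - rewrite <- Hs. apply sumR_le. intros j Hj. pose proof (pow_01 a (d - j) Ha). pose proof (Hr j ltac:(lia)). nra. }
  pose proof (bernoulli b d Hb). assert (0 <= INR d) by apply pos_INR.
  assert (Hx : (1 - INR d * (1 - b)) * phi <= b ^ d * phi) by (apply Rmult_le_compat_r; lra).
  assert (Hy : INR d * (1 - b) * phi <= INR d * (1 - b) * 1)
    by (apply Rmult_le_compat_l; [apply Rmult_le_pos|]; lra).
  lra.
Qed.

Lemma recurrent_sup r d (qq : nat -> nat -> R) : (1 <= d)%nat ->
  (forall j, (j <= d)%nat -> 0 <= r j) -> sumR (S d) r = 1 ->
  INR (d - 1) <= sumR (S d) (fun j => INR j * r j) -> 0 < r d ->
  (forall m F, 0 <= qq m F <= 1) ->
  (forall m F F', (F <= F')%nat -> qq m F <= qq m F') ->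
  (forall F, qq 0%nat F = 1) ->
  (forall m F, (1 <= m)%nat -> exists M,
     sumR (S d) (fun rho => r rho * (qq m F ^ (d - rho) * qq (m - 1)%nat F ^ rho)) <= qq m M) ->
  forall m eps, 0 < eps -> exists F, 1 - eps <= qq m F.
Proof.
  intros Hd Hr Hs Hm Hrd H01 Hmono H0 Hrec. induction m as [|m IH]; intros eps Heps.
  - exists 0%nat. rewrite H0. lra.
  - set (E := fun y => exists F, y = qq (S m) F).
    destruct (completeness E) as [s [Hub Hlub]].
    { exists 1. intros y [F ->]. apply H01. }
    { exists (qq (S m) 0%nat). exists 0%nat; auto. }
    destruct (Rlt_dec (1 - eps) s) as [Hlt|Hge].
    + apply NNPP. intros Hno. assert (is_upper_bound E (1 - eps)).
      { intros y [F ->]. destruct (Rle_dec (1 - eps) (qq (S m) F)); [exfalso; apply Hno; exists F; auto|lra]. }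
      specialize (Hlub _ H). lra.
    + exfalso.
      assert (Hs1 : s < 1) by lra.
      assert (Hs0 : 0 <= s) by (apply (Rle_trans _ (qq (S m) 0%nat)); [apply H01|apply Hub; exists 0%nat; auto]).
      set (delta := r d * (1 - s) ^ 2).
      assert (Hdelta : 0 < delta) by (unfold delta; apply Rmult_lt_0_compat; auto; apply pow_lt; lra).
      set (eta := delta / (2 * (INR d + 1))).
      assert (HdI : 0 <= INR d) by apply pos_INR.
      assert (Heta : 0 < eta) by (unfold eta; apply Rdiv_lt_0_compat; lra).
      assert (Heta2 : (INR d + 1) * eta = delta / 2) by (unfold eta; field; lra).
      assert (HF1 : exists F1, s - eta < qq (S m) F1).
      { apply NNPP. intros Hno. assert (is_upper_bound E (s - eta)).
        { intros y [F ->]. destruct (Rlt_dec (s - eta) (qq (S m) F)); [exfalso; apply Hno; exists F; auto|lra]. }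
        specialize (Hlub _ H). lra. }
      destruct HF1 as [F1 HF1].
      destruct (IH eta Heta) as [F2 HF2].
      set (F := Nat.max F1 F2).
      set (a := qq (S m) F). set (b := qq m F).
      assert (Ha1 : s - eta <= a) by (unfold a; pose proof (Hmono (S m) F1 F ltac:(unfold F; lia)); lra).
      assert (Ha2 : a <= s) by (apply Hub; exists F; auto).
      assert (Hb1 : 1 - eta <= b) by (unfold b; pose proof (Hmono m F2 F ltac:(unfold F; lia)); lra).
      destruct (Hrec (S m) F ltac:(lia)) as [M HM].
      replace (S m - 1)%nat with m in HM by lia. fold a b in HM.
      assert (HaB := H01 (S m) F). assert (HbB := H01 m F). fold a in HaB. fold b in HbB.
      pose proof (mix_bound r d a b Hd Hr Hs HaB HbB) as Hmix.
      pose proof (phi_bound r d a Hd Hr Hs Hm HaB) as Hphi.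
      assert (HsM : qq (S m) M <= s) by (apply Hub; exists M; auto).
      assert (Hsq : (1 - s) ^ 2 <= (1 - a) ^ 2) by (simpl; nra).
      assert (r d * (1 - s) ^ 2 <= r d * (1 - a) ^ 2) by (apply Rmult_le_compat_l; lra).
      fold delta in H.
      assert (INR d * (1 - b) <= INR d * eta) by (apply Rmult_le_compat_l; lra).
      lra.
Qed.

Definition nondecr (U : nat -> R) : Prop := forall n m, (n <= m)%nat -> U n <= U m.

Lemma ext_sup_unique U u v : ext_sup U u -> ext_sup U v -> u = v.
Proof.
  destruct u as [l1|], v as [l2|]; simpl; intros H1 H2.
  - f_equal. eapply is_lub_u; eauto.
  - exfalso. apply H2. exists l1. apply H1.
  - exfalso. apply H1. exists l2. apply H2.
  - auto.
Qed.

Lemma ext_sup_const a : ext_sup (fun _ => a) (Some a).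
Proof.
  simpl. split.
  - intros y [n ->]. lra.
  - intros b Hb. apply Hb. exists 0%nat. auto.
Qed.

Lemma div_le al x b : 0 < al -> al * x <= b -> x <= b / al.
Proof.
  intros H1 H2. unfold Rdiv. apply Rmult_le_reg_l with al; auto.
  replace (al * (b * / al)) with b by (field; lra). auto.
Qed.

Lemma div_le' al x b : 0 < al -> x <= b / al -> al * x <= b.
Proof.
  intros H1 H2. replace b with (al * (b / al)) by (field; lra).
  apply Rmult_le_compat_l; lra.
Qed.

Lemma ext_sup_scal U u al : (forall n, 0 <= U n) -> 0 <= al -> ext_sup U u ->
  ext_sup (fun n => al * U n) (ER_scal al u).
Proof.
  intros HU Hal Hu. destruct (Req_dec_T al 0) as [E|E].
  - subst. assert (ER_scal 0 u = Some 0) as ->.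
    { destruct u; simpl; [f_equal; lra|]. destruct (Req_dec_T 0 0); auto; congruence. }
    simpl. split.
    + intros y [n ->]. lra.
    + intros b Hb. specialize (Hb (0 * U 0%nat)). rewrite Rmult_0_l in Hb. apply Hb. exists 0%nat. lra.
  - assert (Hpos : 0 < al) by lra.
    destruct u as [l|]; simpl in *.
    + destruct Hu as [Hub Hlub]. split.
      * intros y [n ->]. apply Rmult_le_compat_l; auto. apply Hub. exists n; auto.
      * intros b Hb. apply div_le'; auto.
        apply Hlub. intros y [n ->]. apply div_le; auto. apply Hb. exists n. auto.
    + destruct (Req_dec_T al 0) as [E0|E0]; [congruence|].
      intros [M HM]. apply Hu. exists (M / al). intros y [n ->].
      apply div_le; auto. apply HM. exists n; auto.
Qed.

Lemma ext_sup_plus U V u v : nondecr U -> nondecr V -> ext_sup U u -> ext_sup V v ->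
  ext_sup (fun n => U n + V n) (ER_plus u v).
Proof.
  intros HU HV Hu Hv. destruct u as [l1|], v as [l2|]; simpl in *.
  - destruct Hu as [Hu1 Hu2], Hv as [Hv1 Hv2]. split.
    + intros y [n ->]. assert (U n <= l1) by (apply Hu1; exists n; auto).
      assert (V n <= l2) by (apply Hv1; exists n; auto). lra.
    + intros w Hw. apply Rnot_lt_le. intros Hlt. set (g := l1 + l2 - w).
      assert (HA : exists n1, l1 - g / 2 < U n1).
      { apply NNPP. intros Hno. assert (l1 <= l1 - g / 2); [|unfold g in *; lra].
        apply Hu2. intros y [n ->]. apply Rnot_lt_le. intros Hc. apply Hno. exists n; auto. }
      assert (HB : exists n2, l2 - g / 2 < V n2).
      { apply NNPP. intros Hno. assert (l2 <= l2 - g / 2); [|unfold g in *; lra].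
        apply Hv2. intros y [n ->]. apply Rnot_lt_le. intros Hc. apply Hno. exists n; auto. }
      destruct HA as [n1 H1], HB as [n2 H2].
      assert (U n1 <= U (Nat.max n1 n2)) by (apply HU; lia).
      assert (V n2 <= V (Nat.max n1 n2)) by (apply HV; lia).
      assert (U (Nat.max n1 n2) + V (Nat.max n1 n2) <= w) by (apply Hw; exists (Nat.max n1 n2); auto).
      unfold g in *. lra.
  - intros [M HM]. apply Hv. exists (M - U 0%nat). intros y [n ->].
    assert (U 0%nat <= U n) by (apply HU; lia).
    assert (U n + V n <= M) by (apply HM; exists n; auto). lra.
  - intros [M HM]. apply Hu. exists (M - V 0%nat). intros y [n ->].
    assert (V 0%nat <= V n) by (apply HV; lia).
    assert (U n + V n <= M) by (apply HM; exists n; auto). lra.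
  - intros [M HM]. apply Hu. exists (M - V 0%nat). intros y [n ->].
    assert (V 0%nat <= V n) by (apply HV; lia).
    assert (U n + V n <= M) by (apply HM; exists n; auto). lra.
Qed.

Lemma ext_sup_squeeze A Rs rho : nondecr A -> ext_sup Rs rho ->
  (forall N, A (S N) <= Rs N) -> (forall N eps, 0 < eps -> exists M, Rs N - eps <= A M) ->
  ext_sup A rho.
Proof.
  intros HA HR H1 H2. destruct rho as [l|]; simpl in *.
  - destruct HR as [Hub Hlub]. split.
    + intros y [n ->]. assert (A n <= A (S n)) by (apply HA; lia).
      assert (Rs n <= l) by (apply Hub; exists n; auto). specialize (H1 n). lra.
    + intros w Hw. apply Hlub. intros y [N ->]. apply Rnot_lt_le. intros Hc.
      destruct (H2 N ((Rs N - w) / 2) ltac:(lra)) as [M HM].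
      assert (A M <= w) by (apply Hw; exists M; auto). lra.
  - intros [w Hw]. apply HR. exists (w + 1). intros y [N ->].
    destruct (H2 N 1 ltac:(lra)) as [M HM].
    assert (A M <= w) by (apply Hw; exists M; auto). lra.
Qed.

Lemma Etrunc_ge0 r d k x N : (forall j, (j <= d)%nat -> 0 <= r j) -> sumR (S d) r = 1 ->
  0 <= Etrunc r d k x N.
Proof.
  intros Hr Hs. rewrite Etrunc_Fk. rewrite <- (Efin_const r d (words_upto d N) 0 Hs).
  apply Efin_mono_b; auto. intros c _. unfold Fk. apply pos_INR.
Qed.

Theorem theoremA1 (d : nat) (r : nat -> R)
  (hd : (2 <= d)%nat)
  (hr_nonneg : forall j, (j <= d)%nat -> 0 <= r j)
  (hr_sum : sumR (S d) r = 1)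
  (hmean : INR (d - 1) <= sumR (S d) (fun j => INR j * r j))
  (hrd : 0 < r d) :
  forall (k : nat) (x : nat -> nat) (i : nat),
    (1 <= k)%nat -> (forall n, (x n < d)%nat) -> (i < d)%nat ->
    forall a b c : ER,
      g_val r d k (scons i x) a ->
      g_val r d (k - 1) x b ->
      g_val r d k x c ->
      a = ER_plus (Some 1)
            (ER_plus (ER_scal (1 - p r (d - i)) b) (ER_scal (p r (d - i)) c)).
Proof.
  intros k x i Hk Hx Hi a b c Ha Hb Hc.
  assert (Hd1 : (1 <= d)%nat) by lia.
  set (pp := p r (d - i)).
  assert (Hpp : 0 <= pp <= 1).
  { unfold pp, p. split.
    - apply sumR_ge0. intros j Hj. apply hr_nonneg. lia.
    - rewrite <- hr_sum.
      replace (sumR (d - i) r) with (sumR (S d) (fun j => if Nat.ltb j (d - i) then r j else 0)).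
      + apply sumR_le. intros j Hj. destruct (Nat.ltb j (d - i)); [lra|]. apply hr_nonneg; lia.
      + rewrite sumR_split by lia. rewrite (sumR_ext (S d) (fun _ => 0) (fun _ => 0 * 0)) by (intros; ring).
        rewrite (sumR_ext (d - i) (fun _ => 0) (fun _ => 0 * 0)) by (intros; ring).
        rewrite !sumR_scal. lra. }
  set (A := fun N => Etrunc r d k (scons i x) N).
  set (C := fun N => Etrunc r d k x N).
  set (B := fun N => T r d (k - 1) x N).
  assert (HTk : forall N, T r d k x N = C N).
  { intros N. unfold T, C. destruct (Nat.eqb_spec k 0); [lia|auto]. }
  assert (HA : nondecr A) by (intros n m H; apply Etrunc_mono; auto).
  assert (HC : nondecr C) by (intros n m H; apply Etrunc_mono; auto).
  assert (HB : nondecr B).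
  { intros n m H. unfold B, T. destruct (Nat.eqb _ 0); [lra|]. apply Etrunc_mono; auto. }
  assert (HB0 : forall n, 0 <= B n).
  { intros n. unfold B, T. destruct (Nat.eqb _ 0); [lra|]. apply Etrunc_ge0; auto. }
  assert (HC0 : forall n, 0 <= C n) by (intros; apply Etrunc_ge0; auto).
  assert (HsA : ext_sup A a).
  { destruct k as [|k']; [lia|]. exact Ha. }
  assert (HsC : ext_sup C c).
  { destruct k as [|k']; [lia|]. exact Hc. }
  assert (HsB : ext_sup B b).
  { unfold B, T. destruct (k - 1)%nat as [|k'] eqn:Ek.
    - simpl in Hb. subst b. simpl. apply ext_sup_const.
    - exact Hb. }
  set (Rs := fun N => 1 + ((1 - pp) * B N + pp * C N)).
  assert (HsR : ext_sup Rs (ER_plus (Some 1) (ER_plus (ER_scal (1 - pp) b) (ER_scal pp c)))).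
  { apply ext_sup_plus.
    - intros n m _. lra.
    - intros n m H. pose proof (HB n m H). pose proof (HC n m H).
      assert ((1 - pp) * B n <= (1 - pp) * B m) by (apply Rmult_le_compat_l; lra).
      assert (pp * C n <= pp * C m) by (apply Rmult_le_compat_l; lra). lra.
    - apply ext_sup_const.
    - apply ext_sup_plus.
      + intros n m H. apply Rmult_le_compat_l; [lra|]. apply HB; auto.
      + intros n m H. apply Rmult_le_compat_l; [lra|]. apply HC; auto.
      + apply ext_sup_scal; auto. lra.
      + apply ext_sup_scal; auto. lra. }
  assert (Hrecur : forall eps, 0 < eps -> exists F, 1 - eps <= q r d k F).
  { intros eps Heps.
    apply (recurrent_sup r d (fun m F => q r d m F) Hd1 hr_nonneg hr_sum hmean hrd); auto.
    - intros m F. apply q_bounds; auto.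
    - intros m F F' H. apply q_mono; auto.
    - intros F. apply q_zero; auto.
    - intros m F Hm. exists (d * S F + (d + 2) * m)%nat. apply Rec; auto. }
  assert (HsA' : ext_sup A (ER_plus (Some 1) (ER_plus (ER_scal (1 - pp) b) (ER_scal pp c)))).
  { apply (ext_sup_squeeze A Rs); auto.
    - intros N. unfold A, Rs. pose proof (UB r d k i N x Hd1 Hi Hk hr_nonneg hr_sum) as H.
      rewrite HTk in H. fold pp in H. fold (B N) in H. lra.
    - intros N eps Heps.
      assert (HSN : 0 < INR (S N)) by (apply lt_0_INR; lia).
      destruct (Hrecur (eps / INR (S N)) ltac:(apply Rdiv_lt_0_compat; lra)) as [F HF].
      set (M := Nat.max N F).
      exists (S M).
      pose proof (LB r d k i N M x Hd1 Hi Hk ltac:(unfold M; lia) hr_nonneg hr_sum) as H.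
      rewrite HTk in H. fold pp in H. fold (B N) in H.
      assert (q r d k F <= q r d k (S M)) by (apply q_mono; auto; unfold M; lia).
      assert (INR (S N) * (1 - q r d k (S M)) <= eps).
      { assert (INR (S N) * (1 - q r d k (S M)) <= INR (S N) * (eps / INR (S N)))
          by (apply Rmult_le_compat_l; lra).
        replace (INR (S N) * (eps / INR (S N))) with eps in H1 by (field; lra). lra. }
      unfold A, Rs. lra. }
  apply (ext_sup_unique A); auto.
Qed.
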